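(* Let $\lambda\mapsto N(\lambda),M(\lambda)\in\mathbb{R}^{2m\times2m}$ be continuously differentiable in a real parameter $\lambda$, write $\partial=d/d\lambda$, and define $\alpha,\beta,\gamma,F_2,G_2,F_3$ (depending on $\lambda$ and $t$) by $$\begin{bmatrix}\alpha(t)&\beta(t)&\gamma(t)\\0&F_2(t)&G_2(t)\\0&0&F_3(t)\end{bmatrix}:=\exp\!\left(\begin{bmatrix}-N^T&MJ&0\\0&-N^T&M\\0&0&N\end{bmatrix}t\right).$$ Assume $M=M^T$, $F_2(s)^TF_3(s)=I$ and $\partial F_3(s)=-JG_2(s)$ for all $s\in[0,H]$ and all $\lambda$. Then $$\partial G_2(H)=F_2(H)\Big(-\big(F_3(H)^T\gamma(H)\big)^T-F_3(H)^T\gamma(H)+\int_0^HF_3(s)^T\,\partial M\,F_3(s)\,ds-\big(-JG_2(H)\big)^TG_2(H)\Big).$$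
   Context: $J=\begin{bmatrix}0&I_m\\-I_m&0\end{bmatrix}\in\mathbb{R}^{2m\times2m}$. From the definition, $F_2(t)=\exp(-N^Tt)$, $F_3(t)=\exp(Nt)$ and $F_3(t)^TG_2(t)=\int_0^t\exp(N^Ts)M\exp(Ns)\,ds$. *)

(* Defs.v *)
From Stdlib Require Import Reals Arith ClassicalEpsilon.
Open Scope R_scope.

(* Real matrices are represented as functions nat -> nat -> R; a k x k
   matrix only uses entries with indices < k.  All operations below only
   read in-range entries when computing in-range entries. *)
Definition Mat := nat -> nat -> R.

Fixpoint rsum (n : nat) (f : nat -> R) : R :=
  match n with O => 0 | S k => rsum k f + f k end.

Definition mmul (n : nat) (A B : Mat) : Mat :=
  fun i j => rsum n (fun k => A i k * B k j).
Definition madd (A B : Mat) : Mat := fun i j => A i j + B i j.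
Definition mopp (A : Mat) : Mat := fun i j => - A i j.
Definition msub (A B : Mat) : Mat := fun i j => A i j - B i j.
Definition mtr (A : Mat) : Mat := fun i j => A j i.
Definition mscal (c : R) (A : Mat) : Mat := fun i j => c * A i j.
Definition mid : Mat := fun i j => if Nat.eqb i j then 1 else 0.

Fixpoint mpow (n : nat) (A : Mat) (k : nat) : Mat :=
  match k with O => mid | S k => mmul n (mpow n A k) A end.

Definition mexp (n : nat) (A : Mat) : Mat := fun i j =>
  epsilon (inhabits 0)
    (fun l => Un_cv (fun K => sum_f_R0 (fun k => mpow n A k i j / INR (fact k)) K) l).

(* J = [[0, I_m], [-I_m, 0]] *)
Definition Jm (m : nat) : Mat := fun i j =>
  if (Nat.ltb i m && Nat.eqb j (i + m))%bool then 1
  else if (Nat.leb m i && Nat.ltb i (2 * m) && Nat.eqb i (j + m))%bool then -1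
  else 0.

(* The 6m x 6m block matrix [[-N^T, M J, 0], [0, -N^T, M], [0, 0, N]]. *)
Definition bigA (m : nat) (N M : Mat) : Mat := fun i j =>
  let n := (2 * m)%nat in
  if Nat.ltb i n then
    (if Nat.ltb j n then - N j i
     else if Nat.ltb j (2 * n) then mmul n M (Jm m) i (j - n)%nat
     else 0)
  else if Nat.ltb i (2 * n) then
    (if Nat.ltb j n then 0
     else if Nat.ltb j (2 * n) then - N (j - n)%nat (i - n)%nat
     else if Nat.ltb j (3 * n) then M (i - n)%nat (j - 2 * n)%nat
     else 0)
  else if Nat.ltb i (3 * n) then
    (if Nat.ltb j (2 * n) then 0
     else if Nat.ltb j (3 * n) then N (i - 2 * n)%nat (j - 2 * n)%nat
     else 0)
  else 0.

Definition Ephi (m : nat) (N M : Mat) (t : R) : Mat :=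
  mexp (6 * m) (mscal t (bigA m N M)).

Definition blk (m : nat) (E : Mat) (a b : nat) : Mat :=
  fun i j => E (a * (2 * m) + i)%nat (b * (2 * m) + j)%nat.

Definition alphaB m N M t := blk m (Ephi m N M t) 0 0.
Definition betaB  m N M t := blk m (Ephi m N M t) 0 1.
Definition gammaB m N M t := blk m (Ephi m N M t) 0 2.
Definition F2B    m N M t := blk m (Ephi m N M t) 1 1.
Definition G2B    m N M t := blk m (Ephi m N M t) 1 2.
Definition F3B    m N M t := blk m (Ephi m N M t) 2 2.

(* Riemann integral of f over [a,b] (the value of RiemannInt for any
   integrability proof; integrands used here are continuous). *)
Definition Rint (f : R -> R) (a b : R) : R :=
  epsilon (inhabits 0)
    (fun l => exists pr : Riemann_integrable f a b, RiemannInt pr = l).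

(* Main.v *)
Require Import Defs.
From Stdlib Require Import Reals Arith ClassicalEpsilon Lra Lia FunctionalExtensionality.
Open Scope R_scope.


Lemma rsum_ext n f g : (forall k, (k < n)%nat -> f k = g k) -> rsum n f = rsum n g.
Proof. induction n; simpl; intros Hfg; auto. rewrite IHn; [rewrite Hfg; auto; lia| intros; apply Hfg; lia]. Qed.
Lemma rsum_plus n f g : rsum n (fun k => f k + g k) = rsum n f + rsum n g.
Proof. induction n; simpl; [ring|rewrite IHn; ring]. Qed.
Lemma rsum_minus n f g : rsum n (fun k => f k - g k) = rsum n f - rsum n g.
Proof. induction n; simpl; [ring|rewrite IHn; ring]. Qed.
Lemma rsum_scal n c f : rsum n (fun k => c * f k) = c * rsum n f.
Proof. induction n; simpl; [ring|rewrite IHn; ring]. Qed.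
Lemma rsum_scal_r n c f : rsum n (fun k => f k * c) = rsum n f * c.
Proof. induction n; simpl; [ring|rewrite IHn; ring]. Qed.
Lemma rsum_opp n f : rsum n (fun k => - f k) = - rsum n f.
Proof. induction n; simpl; [ring|rewrite IHn; ring]. Qed.
Lemma rsum_zero n : rsum n (fun _ => 0) = 0.
Proof. induction n; simpl; [ring|rewrite IHn; ring]. Qed.
Lemma rsum_zero' n f : (forall k, (k < n)%nat -> f k = 0) -> rsum n f = 0.
Proof. intros; rewrite (rsum_ext n f (fun _ => 0)); auto using rsum_zero. Qed.
Lemma rsum_swap n p f : rsum n (fun a => rsum p (fun b => f a b)) = rsum p (fun b => rsum n (fun a => f a b)).
Proof. induction n; simpl. { rewrite rsum_zero; auto. } rewrite IHn, <- rsum_plus; auto. Qed.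
Lemma rsum_add a b f : rsum (a+b) f = rsum a f + rsum b (fun k => f (a+k)%nat).
Proof. induction b; simpl. { rewrite Nat.add_0_r; ring. } rewrite Nat.add_succ_r; simpl; rewrite IHb; ring. Qed.
Lemma rsum_abs n f : Rabs (rsum n f) <= rsum n (fun k => Rabs (f k)).
Proof. induction n; simpl. { rewrite Rabs_R0; lra. } eapply Rle_trans; [apply Rabs_triang|lra]. Qed.
Lemma rsum_le n f g : (forall k, (k<n)%nat -> f k <= g k) -> rsum n f <= rsum n g.
Proof. induction n; simpl; intros Hfg; [lra|]. assert (f n <= g n) by (apply Hfg; lia). assert (rsum n f <= rsum n g) by (apply IHn; intros; apply Hfg; lia). lra. Qed.
Lemma rsum_nonneg n f : (forall k, (k<n)%nat -> 0 <= f k) -> 0 <= rsum n f.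
Proof. intros; rewrite <- (rsum_zero n); apply rsum_le; auto. Qed.
Lemma rsum_term_le n f i : (i < n)%nat -> (forall k, (k<n)%nat -> 0 <= f k) -> f i <= rsum n f.
Proof. induction n; simpl; intros Hi Hf; [lia|]. destruct (Nat.eq_dec i n) as [->|Hne].
 - assert (0 <= rsum n f) by (apply rsum_nonneg; intros; apply Hf; lia). lra.
 - assert (f i <= rsum n f) by (apply IHn; [lia|intros; apply Hf; lia]). assert (0 <= f n) by (apply Hf; lia). lra. Qed.
Lemma rsum_single n f i : (i<n)%nat -> (forall k, (k<n)%nat -> k<>i -> f k = 0) -> rsum n f = f i.
Proof. induction n; simpl; intros Hi Hf; [lia|]. destruct (Nat.eq_dec i n) as [->|Hne].
 - rewrite rsum_zero'; [ring|]. intros; apply Hf; lia.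
 - rewrite IHn; [rewrite (Hf n); [ring|lia|lia]|lia|]. intros; apply Hf; lia. Qed.

Lemma mmul_assoc n A B C : mmul n (mmul n A B) C = mmul n A (mmul n B C).
Proof. unfold mmul; do 2 (apply functional_extensionality; intro).
 transitivity (rsum n (fun k => rsum n (fun l => A x l * B l k * C k x0))).
 - apply rsum_ext; intros; rewrite <- rsum_scal_r; auto.
 - rewrite rsum_swap; apply rsum_ext; intros; rewrite <- rsum_scal; apply rsum_ext; intros; ring. Qed.
Lemma mmul_madd_l n A B C : mmul n (madd A B) C = madd (mmul n A C) (mmul n B C).
Proof. unfold mmul, madd; do 2 (apply functional_extensionality; intro). rewrite <- rsum_plus; apply rsum_ext; intros; ring. Qed.
Lemma mmul_madd_r n A B C : mmul n A (madd B C) = madd (mmul n A B) (mmul n A C).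
Proof. unfold mmul, madd; do 2 (apply functional_extensionality; intro). rewrite <- rsum_plus; apply rsum_ext; intros; ring. Qed.
Lemma mmul_msub_l n A B C : mmul n (msub A B) C = msub (mmul n A C) (mmul n B C).
Proof. unfold mmul, msub; do 2 (apply functional_extensionality; intro). rewrite <- rsum_minus; apply rsum_ext; intros; ring. Qed.
Lemma mmul_msub_r n A B C : mmul n A (msub B C) = msub (mmul n A B) (mmul n A C).
Proof. unfold mmul, msub; do 2 (apply functional_extensionality; intro). rewrite <- rsum_minus; apply rsum_ext; intros; ring. Qed.
Lemma mmul_mopp_l n A B : mmul n (mopp A) B = mopp (mmul n A B).
Proof. unfold mmul, mopp; do 2 (apply functional_extensionality; intro). rewrite <- rsum_opp; apply rsum_ext; intros; ring. Qed.
Lemma mmul_mopp_r n A B : mmul n A (mopp B) = mopp (mmul n A B).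
Proof. unfold mmul, mopp; do 2 (apply functional_extensionality; intro). rewrite <- rsum_opp; apply rsum_ext; intros; ring. Qed.
Lemma mmul_mscal_l n c A B : mmul n (mscal c A) B = mscal c (mmul n A B).
Proof. unfold mmul, mscal; do 2 (apply functional_extensionality; intro). rewrite <- rsum_scal; apply rsum_ext; intros; ring. Qed.
Lemma mmul_mscal_r n c A B : mmul n A (mscal c B) = mscal c (mmul n A B).
Proof. unfold mmul, mscal; do 2 (apply functional_extensionality; intro). rewrite <- rsum_scal; apply rsum_ext; intros; ring. Qed.
Lemma mtr_mmul n A B : mtr (mmul n A B) = mmul n (mtr B) (mtr A).
Proof. unfold mmul, mtr; do 2 (apply functional_extensionality; intro). apply rsum_ext; intros; ring. Qed.
Lemma mtr_mopp A : mtr (mopp A) = mopp (mtr A). Proof. reflexivity. Qed.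
Lemma mtr_mtr A : mtr (mtr A) = A. Proof. reflexivity. Qed.
Lemma mmul_mid_l n A i j : (i < n)%nat -> mmul n mid A i j = A i j.
Proof. intros; unfold mmul; rewrite (rsum_single n _ i); auto.
 - unfold mid; rewrite Nat.eqb_refl; ring.
 - intros; unfold mid; replace (Nat.eqb i k) with false; [ring|symmetry; apply Nat.eqb_neq; auto]. Qed.
Lemma mmul_mid_r n A i j : (j < n)%nat -> mmul n A mid i j = A i j.
Proof. intros; unfold mmul; rewrite (rsum_single n _ j); auto.
 - unfold mid; rewrite Nat.eqb_refl; ring.
 - intros; unfold mid; replace (Nat.eqb k j) with false; [ring|symmetry; apply Nat.eqb_neq; auto]. Qed.
Lemma mmul_ext_l n A A' B i j : (i < n)%nat -> (forall a b, (a<n)%nat -> (b<n)%nat -> A a b = A' a b) -> mmul n A B i j = mmul n A' B i j.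
Proof. intros; unfold mmul; apply rsum_ext; intros; rewrite H0; auto. Qed.
Lemma mmul_ext_r n A B B' i j : (j < n)%nat -> (forall a b, (a<n)%nat -> (b<n)%nat -> B a b = B' a b) -> mmul n A B i j = mmul n A B' i j.
Proof. intros; unfold mmul; apply rsum_ext; intros; rewrite H0; auto. Qed.

Lemma mpow_scal n t A k : mpow n (mscal t A) k = mscal (t ^ k) (mpow n A k).
Proof. induction k; simpl.
 - unfold mscal; do 2 (apply functional_extensionality; intro); ring.
 - rewrite IHk, mmul_mscal_l, mmul_mscal_r; unfold mscal; do 2 (apply functional_extensionality; intro); ring. Qed.
Lemma mpow_comm n A k i j : (i<n)%nat -> (j<n)%nat -> mmul n A (mpow n A k) i j = mmul n (mpow n A k) A i j.
Proof. revert i j; induction k; intros i j Hi Hj; simpl.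
 - rewrite mmul_mid_l, mmul_mid_r; auto.
 - rewrite <- mmul_assoc. apply mmul_ext_l; auto. Qed.

Definition nrm n (A : Mat) := rsum n (fun a => rsum n (fun b => Rabs (A a b))).
Lemma nrm_nonneg n A : 0 <= nrm n A.
Proof. apply rsum_nonneg; intros; apply rsum_nonneg; intros; apply Rabs_pos. Qed.
Lemma col_le n A j : (j<n)%nat -> rsum n (fun l => Rabs (A l j)) <= nrm n A.
Proof. intros; unfold nrm; rewrite rsum_swap. apply (rsum_term_le n (fun b => rsum n (fun a => Rabs (A a b)))); auto.
 intros; apply rsum_nonneg; intros; apply Rabs_pos. Qed.
Lemma entry_le n A i j : (i<n)%nat -> (j<n)%nat -> Rabs (A i j) <= nrm n A.
Proof. intros; eapply Rle_trans; [|apply (col_le n A j); auto]. apply (rsum_term_le n (fun l => Rabs (A l j))); auto. intros; apply Rabs_pos. Qed.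
Lemma nrm_tri n A B : nrm n A <= nrm n B + nrm n (msub A B).
Proof. unfold nrm; rewrite <- rsum_plus; apply rsum_le; intros; rewrite <- rsum_plus; apply rsum_le; intros.
 unfold msub. replace (A k k0) with (B k k0 + (A k k0 - B k k0)) at 1 by ring. apply Rabs_triang. Qed.
Lemma nrm_mscal n c A : nrm n (mscal c A) = Rabs c * nrm n A.
Proof. unfold nrm, mscal; rewrite <- rsum_scal; apply rsum_ext; intros; rewrite <- rsum_scal; apply rsum_ext; intros; apply Rabs_mult. Qed.
Lemma msub_mscal c A B : msub (mscal c A) (mscal c B) = mscal c (msub A B).
Proof. unfold msub, mscal; do 2 (apply functional_extensionality; intro); ring. Qed.

Lemma mpow_bound n A k i j : (j<n)%nat -> Rabs (mpow n A k i j) <= nrm n A ^ k.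
Proof. revert i j; induction k; intros i j Hj; simpl.
 - unfold mid; destruct (Nat.eqb i j); rewrite ?Rabs_R1, ?Rabs_R0; lra.
 - unfold mmul. eapply Rle_trans; [apply rsum_abs|].
   apply Rle_trans with (rsum n (fun l => nrm n A ^ k * Rabs (A l j))).
   + apply rsum_le; intros; rewrite Rabs_mult; apply Rmult_le_compat_r; [apply Rabs_pos|apply IHk; auto].
   + rewrite rsum_scal. rewrite Rmult_comm. apply Rmult_le_compat_r; [apply pow_le, nrm_nonneg|apply col_le; auto]. Qed.

Lemma mpow_diff n A B r k i j : (j<n)%nat -> nrm n A <= r -> nrm n B <= r ->
  Rabs (mpow n A k i j - mpow n B k i j) <= INR k * nrm n (msub A B) * r ^ (pred k).
Proof. intros Hj HA HB. assert (Hr: 0 <= r) by (pose proof (nrm_nonneg n A); lra).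
 pose proof (nrm_nonneg n (msub A B)) as Hd.
 revert i j Hj; induction k; intros i j Hj; simpl.
 - rewrite Rminus_diag, Rabs_R0; lra.
 - unfold mmul. rewrite <- rsum_minus.
   apply Rle_trans with (rsum n (fun l => INR k * nrm n (msub A B) * r ^ (pred k) * Rabs (A l j) + r ^ k * Rabs (msub A B l j))).
   + eapply Rle_trans; [apply rsum_abs|]. apply rsum_le; intros l Hl.
     replace (mpow n A k i l * A l j - mpow n B k i l * B l j) with ((mpow n A k i l - mpow n B k i l) * A l j + mpow n B k i l * msub A B l j) by (unfold msub; ring).
     eapply Rle_trans; [apply Rabs_triang|]. rewrite !Rabs_mult. apply Rplus_le_compat.
     * apply Rmult_le_compat_r; [apply Rabs_pos|apply IHk; auto].
     * apply Rmult_le_compat_r; [apply Rabs_pos|]. eapply Rle_trans; [apply mpow_bound; auto|]. apply pow_incr; split; [apply nrm_nonneg|auto].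
   + rewrite rsum_plus, rsum_scal, rsum_scal.
     assert (rsum n (fun l => Rabs (A l j)) <= r) by (eapply Rle_trans; [apply col_le|]; auto).
     assert (rsum n (fun l => Rabs (msub A B l j)) <= nrm n (msub A B)) by (apply col_le; auto).
     assert (0 <= rsum n (fun l => Rabs (A l j))) by (apply rsum_nonneg; intros; apply Rabs_pos).
     assert (0 <= rsum n (fun l => Rabs (msub A B l j))) by (apply rsum_nonneg; intros; apply Rabs_pos).
     assert (0 <= r ^ k) by (apply pow_le; auto).
     assert (0 <= INR k) by apply pos_INR.
     destruct k.
     * simpl. nra.
     * simpl pred. rewrite S_INR. replace (r ^ S k) with (r ^ k * r) by (simpl; ring).
       assert (0 <= r ^ k) by (apply pow_le; auto).
       assert (INR (S k) * nrm n (msub A B) * r ^ k * rsum n (fun l => Rabs (A l j)) <= INR (S k) * nrm n (msub A B) * r ^ k * r).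
       { apply Rmult_le_compat_l; auto. apply Rmult_le_pos; [apply Rmult_le_pos|]; auto. }
       assert (r ^ k * r * rsum n (fun l => Rabs (msub A B l j)) <= r ^ k * r * nrm n (msub A B)).
       { apply Rmult_le_compat_l; auto. apply Rmult_le_pos; auto. }
       rewrite S_INR in *. nra. Qed.


Lemma Un_cv_ext u v l : (forall K, u K = v K) -> Un_cv u l -> Un_cv v l.
Proof. intros E; replace v with u; auto. apply functional_extensionality; auto. Qed.
Lemma Un_cv_const c : Un_cv (fun _ => c) c.
Proof. intros eps Heps; exists O; intros; unfold Rdist; rewrite Rminus_diag, Rabs_R0; auto. Qed.
Lemma Un_cv_shift u l : Un_cv u l -> Un_cv (fun K => u (S K)) l.
Proof. intros Hu eps Heps; destruct (Hu eps Heps) as [N HN]; exists N; intros; apply HN; lia. Qed.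
Lemma lim_abs_le u l c : Un_cv u l -> (forall K, Rabs (u K) <= c) -> Rabs l <= c.
Proof. intros Hu Hb. destruct (Rle_dec (Rabs l) c) as [|Hn]; auto. exfalso.
 destruct (Hu (Rabs l - c)) as [N HN]; [lra|]. specialize (HN N (le_n _)). unfold Rdist in HN.
 pose proof (Hb N). pose proof (Rabs_triang_inv l (u N)). rewrite <- Rabs_Ropp in HN. replace (- (u N - l)) with (l - u N) in HN by ring. lra. Qed.
Lemma rsum_cv n u L : (forall l, (l<n)%nat -> Un_cv (u l) (L l)) -> Un_cv (fun K => rsum n (fun l => u l K)) (rsum n L).
Proof. induction n; intros Hu; simpl. { apply Un_cv_const. }
 apply CV_plus; [apply IHn; intros; apply Hu; lia| apply Hu; lia]. Qed.
Lemma sum_rsum K n f : sum_f_R0 (fun k => rsum n (fun l => f k l)) K = rsum n (fun l => sum_f_R0 (fun k => f k l) K).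
Proof. induction K; simpl; auto. rewrite IHK, <- rsum_plus; auto. Qed.
Lemma sum_scal_r K a c : sum_f_R0 a K * c = sum_f_R0 (fun k => a k * c) K.
Proof. induction K; simpl; auto. rewrite <- IHK; ring. Qed.

Lemma sum_scal_l K a c : sum_f_R0 (fun k => c * a k) K = c * sum_f_R0 a K.
Proof. induction K; simpl; auto. rewrite IHK; ring. Qed.

Lemma exp_cv x : Un_cv (fun K => sum_f_R0 (fun k => / INR (fact k) * x ^ k) K) (exp x).
Proof. unfold exp; destruct (exist_exp x) as [l Hl]; simpl; exact Hl. Qed.
Lemma exp_sum_le x K : 0 <= x -> sum_f_R0 (fun k => / INR (fact k) * x ^ k) K <= exp x.
Proof. intros; apply sum_incr; [apply exp_cv|]. intros; apply Rmult_le_pos; [left; apply Rinv_0_lt_compat, INR_fact_lt_0|apply pow_le; auto]. Qed.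
Lemma scal_exp_cv c x : Un_cv (fun K => sum_f_R0 (fun k => c * (/ INR (fact k) * x ^ k)) K) (c * exp x).
Proof. eapply Un_cv_ext; [|apply CV_mult; [apply (Un_cv_const c)|apply exp_cv]].
 intro K; simpl. rewrite scal_sum. apply sum_eq; intros; ring. Qed.

Lemma mexp_cv n B i j : (j<n)%nat -> Un_cv (fun K => sum_f_R0 (fun k => mpow n B k i j / INR (fact k)) K) (mexp n B i j).
Proof. intros Hj. set (a := fun k => mpow n B k i j / INR (fact k)).
 assert (X : {l | Un_cv (fun K => sum_f_R0 (fun k => Rabs (a k)) K) l}).
 { apply Rseries_CV_comp with (fun k => / INR (fact k) * nrm n B ^ k).
   - intros k; split; [apply Rabs_pos|]. unfold a; unfold Rdiv; rewrite Rabs_mult, Rmult_comm.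
     rewrite (Rabs_right (/ _)); [|left; apply Rinv_0_lt_compat, INR_fact_lt_0].
     apply Rmult_le_compat_l; [left; apply Rinv_0_lt_compat, INR_fact_lt_0|apply mpow_bound; auto].
   - exists (exp (nrm n B)); apply exp_cv. }
 pose proof (cauchy_abs a (CV_Cauchy _ X)) as HC. destruct (R_complete _ HC) as [l Hl].
 unfold mexp. apply epsilon_spec. exists l; exact Hl. Qed.

Lemma mexp_bound n B i j : (j<n)%nat -> Rabs (mexp n B i j) <= exp (nrm n B).
Proof. intros Hj. eapply lim_abs_le; [apply mexp_cv; auto|]. intros K.
 eapply Rle_trans; [apply sum_f_R0_triangle|]. eapply Rle_trans; [|apply (exp_sum_le _ K), nrm_nonneg].
 apply sum_Rle; intros. unfold Rdiv; rewrite Rabs_mult, Rmult_comm.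
 rewrite (Rabs_right (/ _)); [|left; apply Rinv_0_lt_compat, INR_fact_lt_0].
 apply Rmult_le_compat_l; [left; apply Rinv_0_lt_compat, INR_fact_lt_0|apply mpow_bound; auto]. Qed.

Lemma fact_S_div k : INR (S k) / INR (fact (S k)) = / INR (fact k).
Proof. change (fact (S k)) with (S k * fact k)%nat. rewrite mult_INR. pose proof (INR_fact_lt_0 k). pose proof (lt_0_INR (S k) (Nat.lt_0_succ k)). field; lra. Qed.

Lemma sum_kbound K r : 0 <= r -> sum_f_R0 (fun k => INR k * r ^ (pred k) / INR (fact k)) K <= exp r.
Proof. intros Hr. destruct K.
 - simpl. replace (0 * 1 / 1) with 0 by field. left; apply exp_pos.
 - rewrite decomp_sum; [|lia]. simpl pred. replace (INR 0 * r ^ pred 0 / INR (fact 0)) with 0 by (simpl; field).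
   replace (INR 0 * r ^ 0 / INR (fact 0)) with 0 by (simpl; field). rewrite Rplus_0_l. eapply Rle_trans; [|apply (exp_sum_le r K Hr)]. right; apply sum_eq; intros.
   simpl pred. rewrite <- fact_S_div. unfold Rdiv; ring. Qed.

Lemma mexp_lip n B C r i j : (j<n)%nat -> nrm n B <= r -> nrm n C <= r ->
  Rabs (mexp n B i j - mexp n C i j) <= nrm n (msub B C) * exp r.
Proof. intros Hj HB HC. assert (Hr: 0 <= r) by (pose proof (nrm_nonneg n B); lra).
 eapply lim_abs_le; [apply CV_minus; apply mexp_cv; auto|]. intros K. cbv beta. rewrite <- minus_sum.
 eapply Rle_trans; [apply sum_f_R0_triangle|].
 eapply Rle_trans with (sum_f_R0 (fun k => nrm n (msub B C) * (INR k * r ^ (pred k) / INR (fact k))) K).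
 - apply sum_Rle; intros. replace (mpow n B n0 i j / INR (fact n0) - mpow n C n0 i j / INR (fact n0)) with ((mpow n B n0 i j - mpow n C n0 i j) * / INR (fact n0)) by (unfold Rdiv; ring).
   rewrite Rabs_mult, (Rabs_right (/ _)); [|left; apply Rinv_0_lt_compat, INR_fact_lt_0].
   replace (nrm n (msub B C) * (INR n0 * r ^ pred n0 / INR (fact n0))) with ((INR n0 * nrm n (msub B C) * r ^ pred n0) * / INR (fact n0)) by (unfold Rdiv; ring).
   apply Rmult_le_compat_r; [left; apply Rinv_0_lt_compat, INR_fact_lt_0|apply mpow_diff; auto].
 - rewrite sum_scal_l. apply Rmult_le_compat_l; [apply nrm_nonneg|apply sum_kbound; auto]. Qed.

Lemma mexp_mul_cv_r n B X i j : (i<n)%nat ->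
  Un_cv (fun K => sum_f_R0 (fun k => mmul n (mpow n B k) X i j / INR (fact k)) K) (mmul n (mexp n B) X i j).
Proof. intros Hi. unfold mmul at 2.
 eapply Un_cv_ext; [|apply (rsum_cv n (fun l K => sum_f_R0 (fun k => mpow n B k i l / INR (fact k)) K * X l j))].
 - intros K; cbv beta. rewrite (rsum_ext n _ (fun l => sum_f_R0 (fun k => mpow n B k i l / INR (fact k) * X l j) K)) by (intros; apply sum_scal_r).
   rewrite <- (sum_rsum K n (fun k l => mpow n B k i l / INR (fact k) * X l j)).
   apply sum_eq; intros. unfold mmul. unfold Rdiv. rewrite <- rsum_scal_r. apply rsum_ext; intros. ring.
 - intros l Hl. apply CV_mult; [apply mexp_cv; auto|apply Un_cv_const]. Qed.

Lemma mexp_mul_cv_l n B X i j : (j<n)%nat ->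
  Un_cv (fun K => sum_f_R0 (fun k => mmul n X (mpow n B k) i j / INR (fact k)) K) (mmul n X (mexp n B) i j).
Proof. intros Hj. unfold mmul at 2.
 eapply Un_cv_ext; [|apply (rsum_cv n (fun l K => X i l * sum_f_R0 (fun k => mpow n B k l j / INR (fact k)) K))].
 - intros K; cbv beta. rewrite (rsum_ext n _ (fun l => sum_f_R0 (fun k => X i l * (mpow n B k l j / INR (fact k))) K)) by (intros; symmetry; apply sum_scal_l).
   rewrite <- (sum_rsum K n (fun k l => X i l * (mpow n B k l j / INR (fact k)))).
   apply sum_eq; intros. unfold mmul. unfold Rdiv. rewrite <- rsum_scal_r. apply rsum_ext; intros. ring.
 - intros l Hl. apply CV_mult; [apply Un_cv_const|apply mexp_cv; auto]. Qed.

Lemma mexp_comm n A t i j : (i<n)%nat -> (j<n)%nat ->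
  mmul n (mexp n (mscal t A)) A i j = mmul n A (mexp n (mscal t A)) i j.
Proof. intros Hi Hj. eapply UL_sequence; [apply mexp_mul_cv_r; auto|].
 eapply Un_cv_ext; [|apply mexp_mul_cv_l; auto]. intros K; cbv beta. apply sum_eq; intros.
 rewrite mpow_scal, mmul_mscal_l, mmul_mscal_r. unfold mscal. rewrite mpow_comm; auto. Qed.

Lemma mexp_zero n A i j : (j<n)%nat -> mexp n (mscal 0 A) i j = mid i j.
Proof. intros Hj. eapply UL_sequence; [apply mexp_cv; auto|].
 eapply Un_cv_ext; [|apply Un_cv_const]. intros K; cbv beta. induction K.
 - simpl; field.
 - rewrite tech5, <- IHK, mpow_scal. unfold mscal. rewrite pow_i by lia. unfold Rdiv; ring. Qed.

Lemma mexp_deriv n A i j t : (i<n)%nat -> (j<n)%nat ->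
  derivable_pt_lim (fun x => mexp n (mscal x A) i j) t (mmul n (mexp n (mscal t A)) A i j).
Proof. intros Hi Hj.
 set (c := fun k => mpow n A k i j / INR (fact k)).
 set (fn := fun k (x : R) => INR (S k) * c (S k) * x ^ k).
 set (rho := nrm n A).
 assert (Hrho : 0 <= rho) by apply nrm_nonneg.
 assert (cvn : forall r : posreal, CVN_r fn r).
 { intros r. exists (fun k => rho ^ (S k) * r ^ k / INR (fact k)). exists (rho * exp (rho * r)). split.
   - eapply Un_cv_ext; [|apply (scal_exp_cv rho (rho * r))]. intros K; cbv beta. apply sum_eq; intros.
     rewrite Rabs_right. { rewrite Rpow_mult_distr; simpl; field. apply INR_fact_neq_0. }
     apply Rle_ge. unfold Rdiv; apply Rmult_le_pos; [apply Rmult_le_pos; apply pow_le; auto; left; apply cond_pos|left; apply Rinv_0_lt_compat, INR_fact_lt_0].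
   - intros k y Hy. unfold Boule in Hy. rewrite Rminus_0_r in Hy. unfold fn, c.
     replace (INR (S k) * (mpow n A (S k) i j / INR (fact (S k))) * y ^ k) with (mpow n A (S k) i j * (INR (S k) / INR (fact (S k))) * y ^ k) by (unfold Rdiv; ring).
     rewrite fact_S_div. rewrite !Rabs_mult. rewrite <- RPow_abs. rewrite (Rabs_right (/ _)); [|left; apply Rinv_0_lt_compat, INR_fact_lt_0].
     replace (rho ^ S k * r ^ k / INR (fact k)) with (rho ^ S k * / INR (fact k) * r ^ k) by (unfold Rdiv; ring).
     assert (0 < / INR (fact k)) by (apply Rinv_0_lt_compat, INR_fact_lt_0).
     apply Rmult_le_compat; [apply Rmult_le_pos; [apply Rabs_pos|lra]|apply pow_le, Rabs_pos| |apply pow_incr; split; [apply Rabs_pos|lra]].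
     apply Rmult_le_compat_r; [lra|apply mpow_bound; auto]. }
 set (cv := CVN_R_CVS fn cvn).
 set (d := mkposreal (Rabs t + 1) ltac:(pose proof (Rabs_pos t); lra)).
 apply (CVU_derivable (fun K x => sum_f_R0 (fun k => c k * x ^ k) (S K)) (fun K x => SP fn K x)
          (fun x => mexp n (mscal x A) i j) (fun x => mmul n (mexp n (mscal x A)) A i j) 0 d).
 - apply CVU_ext_lim with (SFL fn cv). { apply CVN_CVU. apply cvn. }
   intros x Hx. unfold SFL. destruct (cv x) as [l Hl]. eapply UL_sequence; [apply Hl|].
   eapply Un_cv_ext; [|apply mexp_mul_cv_r; auto]. intros K; cbv beta. unfold SP. apply sum_eq; intros k _.
   unfold fn, c. rewrite mpow_scal, mmul_mscal_l. unfold mscal. change (mmul n (mpow n A k) A) with (mpow n A (S k)).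
   replace (INR (S k) * (mpow n A (S k) i j / INR (fact (S k))) * x ^ k) with (mpow n A (S k) i j * x ^ k * (INR (S k) / INR (fact (S k)))) by (unfold Rdiv; ring).
   rewrite fact_S_div. unfold Rdiv; ring.
 - intros x Hx. apply Un_cv_shift with (u := fun K => sum_f_R0 (fun k => c k * x ^ k) K).
   eapply Un_cv_ext; [|apply mexp_cv; auto]. intros K; cbv beta. apply sum_eq; intros k _. unfold c. rewrite mpow_scal. unfold mscal. field. apply INR_fact_neq_0.
 - intros K x Hx. exact (derivable_pt_lim_fs c x (S K) (Nat.lt_0_succ K)).
 - unfold Boule; simpl. rewrite Rminus_0_r. lra. Qed.



Lemma dl_ext f g x l : (forall t, f t = g t) -> derivable_pt_lim f x l -> derivable_pt_lim g x l.
Proof. intros E; replace g with f; auto; apply functional_extensionality; auto. Qed.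
Lemma dl_mult f g x a b : derivable_pt_lim f x a -> derivable_pt_lim g x b -> derivable_pt_lim (fun t => f t * g t) x (a * g x + f x * b).
Proof. intros; apply (derivable_pt_lim_mult f g); auto. Qed.
Lemma dl_plus f g x a b : derivable_pt_lim f x a -> derivable_pt_lim g x b -> derivable_pt_lim (fun t => f t + g t) x (a + b).
Proof. intros; apply (derivable_pt_lim_plus f g); auto. Qed.
Lemma dl_const c x : derivable_pt_lim (fun _ => c) x 0.
Proof. apply (derivable_pt_lim_const c). Qed.
Lemma dl_opp f x a : derivable_pt_lim f x a -> derivable_pt_lim (fun t => - f t) x (- a).
Proof. intros; apply (derivable_pt_lim_opp f); auto. Qed.
Lemma dl_cont f x a : derivable_pt_lim f x a -> continuity_pt f x.
Proof. intros H; apply derivable_continuous_pt; exists a; auto. Qed.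
Lemma dl_rsum n f f' x : (forall k, (k<n)%nat -> derivable_pt_lim (fun t => f k t) x (f' k)) ->
  derivable_pt_lim (fun t => rsum n (fun k => f k t)) x (rsum n f').
Proof. induction n; intros Hf; simpl. { apply dl_const. } apply dl_plus; [apply IHn; intros; apply Hf; lia|apply Hf; lia]. Qed.
Lemma dl_mmul n X Y X' Y' x i j :
  (forall a b, (a<n)%nat -> (b<n)%nat -> derivable_pt_lim (fun t => X t a b) x (X' a b)) ->
  (forall a b, (a<n)%nat -> (b<n)%nat -> derivable_pt_lim (fun t => Y t a b) x (Y' a b)) ->
  (i<n)%nat -> (j<n)%nat ->
  derivable_pt_lim (fun t => mmul n (X t) (Y t) i j) x (mmul n X' (Y x) i j + mmul n (X x) Y' i j).
Proof. intros HX HY Hi Hj. unfold mmul. rewrite <- rsum_plus.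
 apply (dl_rsum n (fun k t => X t i k * Y t k j)). intros; apply dl_mult; auto. Qed.
Lemma cont_rsum n f x : (forall k, (k<n)%nat -> continuity_pt (fun t => f k t) x) ->
  continuity_pt (fun t => rsum n (fun k => f k t)) x.
Proof. induction n; intros Hf; simpl. { apply continuity_pt_const; intros a b; auto. }
 apply (continuity_pt_plus (fun t => rsum n (fun k => f k t)) (f n)); [apply IHn; intros; apply Hf; lia|apply Hf; lia]. Qed.
Lemma cont_mult f g x : continuity_pt f x -> continuity_pt g x -> continuity_pt (fun t => f t * g t) x.
Proof. intros; apply (continuity_pt_mult f g); auto. Qed.
Lemma cont_mmul n X Y x i j :
  (forall a b, (a<n)%nat -> (b<n)%nat -> continuity_pt (fun t => X t a b) x) ->
  (forall a b, (a<n)%nat -> (b<n)%nat -> continuity_pt (fun t => Y t a b) x) ->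
  (i<n)%nat -> (j<n)%nat -> continuity_pt (fun t => mmul n (X t) (Y t) i j) x.
Proof. intros. unfold mmul. apply (cont_rsum n (fun k t => X t i k * Y t k j)). intros; apply cont_mult; auto. Qed.

Definition En n A t := mexp n (mscal t A).

Lemma En_deriv n A t i j : (i<n)%nat -> (j<n)%nat ->
  derivable_pt_lim (fun x => En n A x i j) t (mmul n A (En n A t) i j).
Proof. intros; unfold En; rewrite <- mexp_comm; auto; apply mexp_deriv; auto. Qed.
Lemma En_deriv' n A t i j : (i<n)%nat -> (j<n)%nat ->
  derivable_pt_lim (fun x => En n A x i j) t (mmul n (En n A t) A i j).
Proof. intros; unfold En; apply mexp_deriv; auto. Qed.
Lemma En_cont n A t i j : (i<n)%nat -> (j<n)%nat -> continuity_pt (fun x => En n A x i j) t.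
Proof. intros; eapply dl_cont; apply En_deriv; auto. Qed.
Lemma En_neg_deriv n A t i j : (i<n)%nat -> (j<n)%nat ->
  derivable_pt_lim (fun x => En n A (- x) i j) t (- mmul n A (En n A (- t)) i j).
Proof. intros. replace (- mmul n A (En n A (- t)) i j) with (mmul n A (En n A (- t)) i j * (-1)) by ring.
 apply (derivable_pt_lim_comp Ropp (fun x => En n A x i j)).
 - replace (-1) with (- 1) by ring. apply (derivable_pt_lim_opp id). apply derivable_pt_lim_id.
 - apply En_deriv; auto. Qed.
Lemma En_zero n A i j : (j<n)%nat -> En n A 0 i j = mid i j.
Proof. intros; unfold En; apply mexp_zero; auto. Qed.

Lemma En_inv n A t i j : (i<n)%nat -> (j<n)%nat -> mmul n (En n A t) (En n A (- t)) i j = mid i j.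
Proof. intros Hi Hj.
 set (f := fun x => mmul n (En n A x) (En n A (- x)) i j).
 assert (Hd : forall x, derivable_pt_lim f x 0).
 { intros x. unfold f. eapply (fun H => eq_ind _ (fun v => derivable_pt_lim _ x v) H 0).
   - apply dl_mmul; auto. intros; apply En_deriv'; auto. intros; apply En_neg_deriv; auto.
   - change (mmul n (mmul n (En n A x) A) (En n A (- x)) i j + mmul n (En n A x) (mopp (mmul n A (En n A (- x)))) i j = 0).
     rewrite mmul_mopp_r, <- mmul_assoc. unfold mopp; ring. }
 assert (Hc : constant f).
 { apply (null_derivative_1 f (fun x => exist _ 0 (Hd x))). intros; reflexivity. }
 change (f t = mid i j). rewrite (Hc t 0). unfold f. replace (-0) with 0 by ring.
 rewrite (mmul_ext_r n _ _ mid); auto. rewrite mmul_mid_r; auto. apply En_zero; auto.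
 intros; apply En_zero; auto. Qed.


Ltac bA_tac := unfold bigA; cbv zeta;
  repeat match goal with |- context [Nat.ltb ?a ?b] => destruct (Nat.ltb_spec a b); try lia end.

Section Blocks.
Variables (m : nat) (N M : Mat).
Let k := (2 * m)%nat.
Lemma bA00 i l : (i<k)%nat -> (l<k)%nat -> bigA m N M (0*k+i)%nat (0*k+l)%nat = - N l i.
Proof. unfold k; intros; bA_tac. do 2 f_equal; lia. Qed.
Lemma bA01 i l : (i<k)%nat -> (l<k)%nat -> bigA m N M (0*k+i)%nat (1*k+l)%nat = mmul k M (Jm m) i l.
Proof. unfold k; intros; bA_tac. f_equal; lia. Qed.
Lemma bA02 i l : (i<k)%nat -> (l<k)%nat -> bigA m N M (0*k+i)%nat (2*k+l)%nat = 0.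
Proof. unfold k; intros; bA_tac; auto. Qed.
Lemma bA10 i l : (i<k)%nat -> (l<k)%nat -> bigA m N M (1*k+i)%nat (0*k+l)%nat = 0.
Proof. unfold k; intros; bA_tac; auto. Qed.
Lemma bA11 i l : (i<k)%nat -> (l<k)%nat -> bigA m N M (1*k+i)%nat (1*k+l)%nat = - N l i.
Proof. unfold k; intros; bA_tac. f_equal; f_equal; lia. Qed.
Lemma bA12 i l : (i<k)%nat -> (l<k)%nat -> bigA m N M (1*k+i)%nat (2*k+l)%nat = M i l.
Proof. unfold k; intros; bA_tac. f_equal; lia. Qed.
Lemma bA20 i l : (i<k)%nat -> (l<k)%nat -> bigA m N M (2*k+i)%nat (0*k+l)%nat = 0.
Proof. unfold k; intros; bA_tac; auto. Qed.
Lemma bA21 i l : (i<k)%nat -> (l<k)%nat -> bigA m N M (2*k+i)%nat (1*k+l)%nat = 0.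
Proof. unfold k; intros; bA_tac; auto. Qed.
Lemma bA22 i l : (i<k)%nat -> (l<k)%nat -> bigA m N M (2*k+i)%nat (2*k+l)%nat = N i l.
Proof. unfold k; intros; bA_tac. f_equal; lia. Qed.
Lemma bA_ut i l : (2*k <= i)%nat -> (l < 2*k)%nat -> bigA m N M i l = 0.
Proof. unfold k; intros; bA_tac; auto. Qed.
End Blocks.


Lemma rsum_split3 m f : rsum (6*m) f =
  rsum (2*m) (fun l => f (0*(2*m)+l)%nat) + rsum (2*m) (fun l => f (1*(2*m)+l)%nat) + rsum (2*m) (fun l => f (2*(2*m)+l)%nat).
Proof. replace (6*m)%nat with (2*m + (2*m + 2*m))%nat by lia. rewrite !rsum_add. rewrite Rplus_assoc. f_equal. f_equal; apply rsum_ext; intros; f_equal; lia. Qed.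

Lemma ut_mpow n p A : (forall i l, (p <= i)%nat -> (l < p)%nat -> A i l = 0) ->
  forall q i l, (p <= i)%nat -> (l < p)%nat -> mpow n A q i l = 0.
Proof. intros HA q; induction q; intros i l Hi Hl; simpl.
 - unfold mid. replace (Nat.eqb i l) with false; auto. symmetry; apply Nat.eqb_neq; lia.
 - unfold mmul. apply rsum_zero'. intros r Hr. destruct (Nat.lt_ge_cases r p).
   + rewrite IHq; auto; ring.
   + rewrite HA; auto; ring. Qed.
Lemma ut_mexp n p A t i l : (l < n)%nat -> (forall i l, (p <= i)%nat -> (l < p)%nat -> A i l = 0) ->
  (p <= i)%nat -> (l < p)%nat -> En n A t i l = 0.
Proof. intros Hn HA Hi Hl. unfold En. eapply UL_sequence; [apply mexp_cv; auto|].
 assert (Hz : forall q, mpow n (mscal t A) q i l = 0).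
 { intros; apply (ut_mpow n p); auto. intros; unfold mscal; rewrite HA; auto; ring. }
 eapply Un_cv_ext; [|apply Un_cv_const]. intros K; cbv beta. symmetry. induction K.
 - change (mpow n (mscal t A) 0 i l / INR (fact 0) = 0). rewrite Hz. unfold Rdiv; ring.
 - rewrite tech5, IHK, Hz. unfold Rdiv; ring. Qed.

Lemma dl_eqv f x l l' : l = l' -> derivable_pt_lim f x l -> derivable_pt_lim f x l'.
Proof. intros ->; auto. Qed.

Section Ode.
Variables (m : nat) (N M : Mat).
Let k := (2 * m)%nat.
Let A := bigA m N M.
Lemma Ephi_En t : Ephi m N M t = En (6*m) A t. Proof. reflexivity. Qed.
Lemma E_ut t i l : (i < 2*m)%nat -> (l < 4*m)%nat -> Ephi m N M t (2*k + i)%nat l = 0.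
Proof. intros. rewrite Ephi_En. apply (ut_mexp _ (2*k)); unfold k in *; try lia. intros; apply bA_ut; lia. Qed.

Lemma F3_deriv t i j : (i<k)%nat -> (j<k)%nat ->
  derivable_pt_lim (fun x => F3B m N M x i j) t (mmul k N (F3B m N M t) i j).
Proof. intros Hi Hj. unfold F3B, blk. fold k.
 apply dl_eqv with (mmul (6*m) A (En (6*m) A t) (2*k+i)%nat (2*k+j)%nat).
 2:{ apply (En_deriv (6*m) A t); unfold k in *; lia. }
 unfold mmul. rewrite rsum_split3. fold k.
   rewrite (rsum_zero' k (fun l => A (2*k+i)%nat (0*k+l)%nat * _)) by (intros; unfold A; rewrite bA20; auto; ring).
   rewrite (rsum_zero' k (fun l => A (2*k+i)%nat (1*k+l)%nat * _)) by (intros; unfold A; rewrite bA21; auto; ring).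
   rewrite Rplus_0_l, Rplus_0_l. apply rsum_ext; intros. unfold A; rewrite bA22; auto. Qed.

Lemma G2_deriv t i j : (i<k)%nat -> (j<k)%nat ->
  derivable_pt_lim (fun x => G2B m N M x i j) t (mmul k (mopp (mtr N)) (G2B m N M t) i j + mmul k M (F3B m N M t) i j).
Proof. intros Hi Hj. unfold G2B, F3B, blk. fold k.
 apply dl_eqv with (mmul (6*m) A (En (6*m) A t) (1*k+i)%nat (2*k+j)%nat).
 2:{ apply (En_deriv (6*m) A t); unfold k in *; lia. }
 unfold mmul. rewrite rsum_split3. fold k.
 rewrite (rsum_zero' k (fun l => A (1*k+i)%nat (0*k+l)%nat * _)) by (intros; unfold A; rewrite bA10; auto; ring).
 rewrite Rplus_0_l. f_equal; apply rsum_ext; intros; unfold A.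
 - rewrite bA11; auto.
 - rewrite bA12; auto. Qed.

Lemma gamma_deriv t i j : (i<k)%nat -> (j<k)%nat ->
  derivable_pt_lim (fun x => gammaB m N M x i j) t (mmul k (mopp (mtr N)) (gammaB m N M t) i j + mmul k (mmul k M (Jm m)) (G2B m N M t) i j).
Proof. intros Hi Hj. unfold gammaB, G2B, blk. fold k.
 apply dl_eqv with (mmul (6*m) A (En (6*m) A t) (0*k+i)%nat (2*k+j)%nat).
 2:{ apply (En_deriv (6*m) A t); unfold k in *; lia. }
 unfold mmul. rewrite rsum_split3. fold k.
 rewrite (rsum_zero' k (fun l => A (0*k+i)%nat (2*k+l)%nat * _)) by (intros; unfold A; rewrite bA02; auto; ring).
 rewrite Rplus_0_r. f_equal; apply rsum_ext; intros; unfold A.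
 - rewrite bA00; auto.
 - rewrite bA01; auto. Qed.

Lemma mid_shift a i j : mid (a+i)%nat (a+j)%nat = mid i j.
Proof. unfold mid. destruct (Nat.eqb_spec i j); destruct (Nat.eqb_spec (a+i) (a+j)); auto; lia. Qed.

Lemma F3_inv t i j : (i<k)%nat -> (j<k)%nat -> mmul k (F3B m N M t) (F3B m N M (-t)) i j = mid i j.
Proof. intros Hi Hj. rewrite <- (mid_shift (2*k)). rewrite <- (En_inv (6*m) A t); unfold k in *; try lia.
 unfold mmul at 2. rewrite rsum_split3. rewrite (rsum_zero' (2*m) (fun l => En _ A t _ (0*(2*m)+l)%nat * _)).
 rewrite (rsum_zero' (2*m) (fun l => En _ A t _ (1*(2*m)+l)%nat * _)). rewrite !Rplus_0_l. reflexivity.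
 - intros. change (En (6*m) A t) with (Ephi m N M t). rewrite E_ut; unfold k; try lia; ring.
 - intros. change (En (6*m) A t) with (Ephi m N M t). rewrite E_ut; unfold k; try lia; ring. Qed.

Lemma G2_zero i j : (i<k)%nat -> (j<k)%nat -> G2B m N M 0 i j = 0.
Proof. intros. unfold G2B, blk. change (Ephi m N M 0) with (En (6*m) A 0). rewrite En_zero; unfold k in *; try lia.
 unfold mid. destruct (Nat.eqb_spec (1 * (2 * m) + i) (2 * (2 * m) + j)); auto; lia. Qed.
Lemma gamma_zero i j : (i<k)%nat -> (j<k)%nat -> gammaB m N M 0 i j = 0.
Proof. intros. unfold gammaB, blk. change (Ephi m N M 0) with (En (6*m) A 0). rewrite En_zero; unfold k in *; try lia.
 unfold mid. destruct (Nat.eqb_spec (0 * (2 * m) + i) (2 * (2 * m) + j)); auto; lia. Qed.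
End Ode.


Lemma Rint_eq f a b (pr : Riemann_integrable f a b) : Rint f a b = RiemannInt pr.
Proof. unfold Rint.
 destruct (epsilon_spec (inhabits 0) (fun l => exists pr : Riemann_integrable f a b, RiemannInt pr = l)
   (ex_intro _ (RiemannInt pr) (ex_intro _ pr eq_refl))) as [pr' Hpr'].
 rewrite <- Hpr'. apply RiemannInt_P5. Qed.

Lemma FTC_gen F f a b : (forall x, derivable_pt_lim F x (f x)) -> continuity f -> a <= b -> Rint f a b = F b - F a.
Proof. intros Hd Hc Hab.
 set (d := fun x => exist (fun l => derivable_pt_lim F x l) (f x) (Hd x) : derivable_pt F x).
 set (C := @mkC1 F d Hc).
 assert (pr : Riemann_integrable f a b) by (apply continuity_implies_RiemannInt; auto).
 rewrite (Rint_eq f a b pr). exact (@FTC_Riemann C a b pr). Qed.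

Lemma Rint_ext f g a b : a <= b -> (forall x, a <= x <= b -> f x = g x) ->
  (forall x, a <= x <= b -> continuity_pt f x) -> (forall x, a <= x <= b -> continuity_pt g x) -> Rint f a b = Rint g a b.
Proof. intros Hab E Hc Hc2. assert (pr : Riemann_integrable f a b) by (apply continuity_implies_RiemannInt; auto).
 assert (pr2 : Riemann_integrable g a b) by (apply continuity_implies_RiemannInt; auto).
 rewrite (Rint_eq f a b pr), (Rint_eq g a b pr2). apply RiemannInt_P18; auto. intros; apply E; lra. Qed.

Lemma Rint_lin f g l a b : a <= b -> (forall x, a <= x <= b -> continuity_pt f x) -> (forall x, a <= x <= b -> continuity_pt g x) ->
  Rint (fun x => f x + l * g x) a b = Rint f a b + l * Rint g a b.
Proof. intros Hab Hf Hg.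
 assert (pr : Riemann_integrable f a b) by (apply continuity_implies_RiemannInt; auto).
 assert (pr2 : Riemann_integrable g a b) by (apply continuity_implies_RiemannInt; auto).
 assert (pr3 : Riemann_integrable (fun x => f x + l * g x) a b).
 { apply continuity_implies_RiemannInt; auto. intros. apply (continuity_pt_plus f (fun x => l * g x)); auto.
   apply (continuity_pt_mult (fun _ => l) g); auto. apply continuity_pt_const; intros u v; auto. }
 rewrite (Rint_eq _ _ _ pr), (Rint_eq _ _ _ pr2), (Rint_eq _ _ _ pr3). apply RiemannInt_P13. Qed.

Lemma Rint_plus f g a b : a <= b -> (forall x, a <= x <= b -> continuity_pt f x) -> (forall x, a <= x <= b -> continuity_pt g x) ->
  Rint (fun x => f x + g x) a b = Rint f a b + Rint g a b.
Proof. intros. rewrite (Rint_ext _ (fun x => f x + 1 * g x)); auto.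
 - rewrite Rint_lin; auto; ring.
 - intros; ring.
 - intros. apply (continuity_pt_plus f g); auto.
 - intros. apply (continuity_pt_plus f (fun x => 1 * g x)); auto. apply (continuity_pt_mult (fun _ => 1) g); auto. apply continuity_pt_const; intros u v; auto. Qed.

Lemma Rint_opp f a b : a <= b -> (forall x, a <= x <= b -> continuity_pt f x) -> Rint (fun x => - f x) a b = - Rint f a b.
Proof. intros. rewrite (Rint_ext _ (fun x => f x + (-2) * f x)); auto.
 - rewrite Rint_lin; auto; ring.
 - intros; ring.
 - intros. apply (continuity_pt_opp f); auto.
 - intros. apply (continuity_pt_plus f (fun x => -2 * f x)); auto. apply (continuity_pt_mult (fun _ => -2) f); auto. apply continuity_pt_const; intros u v; auto. Qed.

Lemma Rint_bound f a b c : a <= b -> (forall x, a <= x <= b -> continuity_pt f x) -> (forall x, a <= x <= b -> Rabs (f x) <= c) ->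
  Rabs (Rint f a b) <= c * (b - a).
Proof. intros Hab Hf Hb.
 assert (pr : Riemann_integrable f a b) by (apply continuity_implies_RiemannInt; auto).
 rewrite (Rint_eq _ _ _ pr). eapply Rle_trans; [apply (RiemannInt_P17 pr (RiemannInt_P16 pr)); auto|].
 refine (proj2 (@RiemannInt_const_bound (fun x => Rabs (f x)) a b 0 c (RiemannInt_P16 pr) Hab _)). intros; split; [apply Rabs_pos|apply Hb; lra]. Qed.

Section Ident.
Variables (m : nat) (N M : Mat).
Let k := (2 * m)%nat.
Let A := bigA m N M.
Lemma blk_cont a b t i j : (a < 3)%nat -> (b < 3)%nat -> (i<k)%nat -> (j<k)%nat ->
  continuity_pt (fun x => blk m (Ephi m N M x) a b i j) t.
Proof. intros. unfold blk. apply (En_cont (6*m) A); unfold k in *; nia. Qed.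
Lemma F3_cont t i j : (i<k)%nat -> (j<k)%nat -> continuity_pt (fun x => F3B m N M x i j) t.
Proof. intros; apply (blk_cont 2 2); auto. Qed.
Lemma G2_cont t i j : (i<k)%nat -> (j<k)%nat -> continuity_pt (fun x => G2B m N M x i j) t.
Proof. intros; apply (blk_cont 1 2); auto. Qed.
Lemma gamma_cont t i j : (i<k)%nat -> (j<k)%nat -> continuity_pt (fun x => gammaB m N M x i j) t.
Proof. intros; apply (blk_cont 0 2); auto. Qed.
Lemma F2_cont t i j : (i<k)%nat -> (j<k)%nat -> continuity_pt (fun x => F2B m N M x i j) t.
Proof. intros; apply (blk_cont 1 1); auto. Qed.

Lemma cst_cont (c : R) t : continuity_pt (fun _ => c) t.
Proof. apply continuity_pt_const; intros u v; auto. Qed.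

Lemma I1 H p q : 0 <= H -> (p<k)%nat -> (q<k)%nat ->
  mmul k (mtr (F3B m N M H)) (G2B m N M H) p q = Rint (fun s => mmul k (mmul k (mtr (F3B m N M s)) M) (F3B m N M s) p q) 0 H.
Proof. intros HH Hp Hq. rewrite (FTC_gen (fun t => mmul k (mtr (F3B m N M t)) (G2B m N M t) p q)); auto.
 - replace (mmul k (mtr (F3B m N M 0)) (G2B m N M 0) p q) with 0. { ring. }
   unfold mmul; symmetry; apply rsum_zero'; intros; rewrite G2_zero; auto; ring.
 - intros x. eapply dl_eqv; [|apply dl_mmul; auto].
   3:{ intros a b Ha Hb. apply G2_deriv; auto. }
   2:{ intros a b Ha Hb. unfold mtr. apply F3_deriv; auto. }
   change (mmul k (mtr (mmul k N (F3B m N M x))) (G2B m N M x) p q +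
     mmul k (mtr (F3B m N M x)) (madd (mmul k (mopp (mtr N)) (G2B m N M x)) (mmul k M (F3B m N M x))) p q =
     mmul k (mmul k (mtr (F3B m N M x)) M) (F3B m N M x) p q).
   rewrite mmul_madd_r, mtr_mmul, mmul_mopp_l, mmul_mopp_r, !mmul_assoc. unfold madd, mopp; ring.
 - intros x. apply cont_mmul; auto; intros; [apply cont_mmul; auto; intros; [unfold mtr; apply F3_cont|apply cst_cont]; auto|apply F3_cont; auto]. Qed.

Lemma I2 H p q : 0 <= H -> (p<k)%nat -> (q<k)%nat ->
  mmul k (mtr (F3B m N M H)) (gammaB m N M H) p q = Rint (fun s => mmul k (mtr (F3B m N M s)) (mmul k (mmul k M (Jm m)) (G2B m N M s)) p q) 0 H.
Proof. intros HH Hp Hq. rewrite (FTC_gen (fun t => mmul k (mtr (F3B m N M t)) (gammaB m N M t) p q)); auto.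
 - replace (mmul k (mtr (F3B m N M 0)) (gammaB m N M 0) p q) with 0. { ring. }
   unfold mmul; symmetry; apply rsum_zero'; intros; rewrite gamma_zero; auto; ring.
 - intros x. eapply dl_eqv; [|apply dl_mmul; auto].
   3:{ intros a b Ha Hb. apply gamma_deriv; auto. }
   2:{ intros a b Ha Hb. unfold mtr. apply F3_deriv; auto. }
   change (mmul k (mtr (mmul k N (F3B m N M x))) (gammaB m N M x) p q +
     mmul k (mtr (F3B m N M x)) (madd (mmul k (mopp (mtr N)) (gammaB m N M x)) (mmul k (mmul k M (Jm m)) (G2B m N M x))) p q =
     mmul k (mtr (F3B m N M x)) (mmul k (mmul k M (Jm m)) (G2B m N M x)) p q).
   rewrite mmul_madd_r, mtr_mmul, mmul_mopp_l, mmul_mopp_r, !mmul_assoc. unfold madd, mopp; ring.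
 - intros x. apply cont_mmul; auto; intros; [unfold mtr; apply F3_cont; auto|apply cont_mmul; auto; intros; [apply cst_cont|apply G2_cont; auto]]. Qed.
End Ident.


Section ULim.
Variable T : R.
Definition UB (L : R -> R) := exists C, forall s, 0 <= s <= T -> Rabs (L s) <= C.
Definition ULim (f : R -> R -> R) (L : R -> R) := UB L /\ forall eps, 0 < eps -> exists del, 0 < del /\
  forall h, h <> 0 -> Rabs h < del -> forall s, 0 <= s <= T -> Rabs (f h s - L s) < eps.

Lemma UB_pos L : UB L -> exists C, 0 <= C /\ forall s, 0 <= s <= T -> Rabs (L s) <= C.
Proof. intros [C HC]; exists (Rabs C); split; [apply Rabs_pos|]. intros; eapply Rle_trans; [apply HC; auto|apply RRle_abs]. Qed.
Lemma UB_const c : UB (fun _ => c).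
Proof. exists (Rabs c); intros; lra. Qed.
Lemma UB_plus f g : UB f -> UB g -> UB (fun s => f s + g s).
Proof. intros [C1 H1] [C2 H2]; exists (C1 + C2); intros s Hs. eapply Rle_trans; [apply Rabs_triang|]. specialize (H1 s Hs); specialize (H2 s Hs); lra. Qed.
Lemma UB_mult f g : UB f -> UB g -> UB (fun s => f s * g s).
Proof. intros H1 H2. destruct (UB_pos _ H1) as [C1 [P1 H1']]; destruct (UB_pos _ H2) as [C2 [P2 H2']].
 exists (C1 * C2); intros; rewrite Rabs_mult; apply Rmult_le_compat; auto; apply Rabs_pos. Qed.
Lemma UB_opp f : UB f -> UB (fun s => - f s).
Proof. intros [C HC]; exists C; intros; rewrite Rabs_Ropp; auto. Qed.
Lemma UB_ext f g : (forall s, 0 <= s <= T -> f s = g s) -> UB f -> UB g.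
Proof. intros E [C HC]; exists C; intros; rewrite <- E; auto. Qed.
Lemma UB_rsum n f : (forall k, (k<n)%nat -> UB (f k)) -> UB (fun s => rsum n (fun k => f k s)).
Proof. induction n; intros Hf; simpl. { apply UB_const. } apply (UB_plus (fun s => rsum n (fun k => f k s)) (f n)); [apply IHn; intros; apply Hf; lia|apply Hf; lia]. Qed.

Lemma ULim_ext f g L : (forall h s, h <> 0 -> 0 <= s <= T -> f h s = g h s) -> ULim f L -> ULim g L.
Proof. intros E [HB HL]; split; auto. intros eps Heps; destruct (HL eps Heps) as [d [Hd Hh]]; exists d; split; auto.
 intros; rewrite <- E; auto. Qed.
Lemma ULim_Lext f L L' : (forall s, 0 <= s <= T -> L s = L' s) -> ULim f L -> ULim f L'.
Proof. intros E [HB HL]; split. { eapply UB_ext; eauto. } intros eps Heps; destruct (HL eps Heps) as [d [Hd Hh]]; exists d; split; auto.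
 intros; rewrite <- E; auto. Qed.
Lemma ULim_const L : UB L -> ULim (fun _ s => L s) L.
Proof. intros HB; split; auto. intros eps Heps; exists 1; split; [lra|]. intros; rewrite Rminus_diag, Rabs_R0; auto. Qed.
Lemma ULim_id : ULim (fun h _ => h) (fun _ => 0).
Proof. split; [apply UB_const|]. intros eps Heps; exists eps; split; auto. intros; rewrite Rminus_0_r; auto. Qed.
Lemma ULim_plus f g F G : ULim f F -> ULim g G -> ULim (fun h s => f h s + g h s) (fun s => F s + G s).
Proof. intros [BF HF] [BG HG]; split; [apply UB_plus; auto|]. intros eps Heps.
 destruct (HF (eps/2)) as [d1 [Hd1 H1]]; [lra|]. destruct (HG (eps/2)) as [d2 [Hd2 H2]]; [lra|].
 exists (Rmin d1 d2); split; [apply Rmin_pos; auto|]. intros h Hh Hhd s Hs.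
 assert (Rabs h < d1) by (eapply Rlt_le_trans; [apply Hhd|apply Rmin_l]).
 assert (Rabs h < d2) by (eapply Rlt_le_trans; [apply Hhd|apply Rmin_r]).
 specialize (H1 h Hh H s Hs); specialize (H2 h Hh H0 s Hs).
 replace (f h s + g h s - (F s + G s)) with ((f h s - F s) + (g h s - G s)) by ring.
 eapply Rle_lt_trans; [apply Rabs_triang|lra]. Qed.
Lemma ULim_opp f F : ULim f F -> ULim (fun h s => - f h s) (fun s => - F s).
Proof. intros [BF HF]; split; [apply UB_opp; auto|]. intros eps Heps; destruct (HF eps Heps) as [d [Hd Hh]]; exists d; split; auto.
 intros. replace (- f h s - - F s) with (- (f h s - F s)) by ring. rewrite Rabs_Ropp; auto. Qed.
Lemma ULim_mult f g F G : ULim f F -> ULim g G -> ULim (fun h s => f h s * g h s) (fun s => F s * G s).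
Proof. intros [BF HF] [BG HG]; split; [apply UB_mult; auto|]. intros eps Heps.
 destruct (UB_pos _ BF) as [CF [PF BF']]; destruct (UB_pos _ BG) as [CG [PG BG']].
 set (e := Rmin 1 (eps / (CF + CG + 2))).
 assert (He : 0 < e) by (apply Rmin_pos; [lra|apply Rdiv_lt_0_compat; lra]).
 assert (He1 : e <= 1) by apply Rmin_l.
 assert (He2 : e * (CF + CG + 2) <= eps).
 { assert (e <= eps / (CF + CG + 2)) by apply Rmin_r. apply Rmult_le_compat_r with (r := CF + CG + 2) in H; [|lra].
   unfold Rdiv in H; rewrite Rmult_assoc, Rinv_l in H; lra. }
 destruct (HF e He) as [d1 [Hd1 H1]]. destruct (HG e He) as [d2 [Hd2 H2]].
 exists (Rmin d1 d2); split; [apply Rmin_pos; auto|]. intros h Hh Hhd s Hs.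
 assert (Rabs h < d1) by (eapply Rlt_le_trans; [apply Hhd|apply Rmin_l]).
 assert (Rabs h < d2) by (eapply Rlt_le_trans; [apply Hhd|apply Rmin_r]).
 specialize (H1 h Hh H s Hs); specialize (H2 h Hh H0 s Hs). specialize (BF' s Hs); specialize (BG' s Hs).
 replace (f h s * g h s - F s * G s) with ((f h s - F s) * g h s + F s * (g h s - G s)) by ring.
 eapply Rle_lt_trans; [apply Rabs_triang|]. rewrite !Rabs_mult.
 assert (Rabs (g h s) <= CG + e). { replace (g h s) with (G s + (g h s - G s)) by ring. eapply Rle_trans; [apply Rabs_triang|lra]. }
 assert (Rabs (f h s - F s) * Rabs (g h s) <= e * (CG + 1)).
 { apply Rmult_le_compat; auto using Rabs_pos; lra. }
 assert (Rabs (F s) * Rabs (g h s - G s) <= CF * e).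
 { apply Rmult_le_compat; auto using Rabs_pos; lra. }
 nra. Qed.
Lemma ULim_rsum n f F : (forall k, (k<n)%nat -> ULim (f k) (F k)) -> ULim (fun h s => rsum n (fun k => f k h s)) (fun s => rsum n (fun k => F k s)).
Proof. induction n; intros Hf; simpl. { apply (ULim_const (fun _ => 0)), UB_const. }
 apply (ULim_plus (fun h s => rsum n (fun k => f k h s)) (f n) (fun s => rsum n (fun k => F k s)) (F n)); [apply IHn; intros; apply Hf; lia|apply Hf; lia]. Qed.

(* Uniform differentiability in the parameter *)
Definition Good (phi : R -> R -> R) (psi : R -> R) (l : R) :=
  ULim (fun h s => (phi (l + h) s - phi l s) / h) psi /\ UB (phi l).

Lemma Good_cont phi psi l : Good phi psi l -> ULim (fun h s => phi (l + h) s) (phi l).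
Proof. intros [HU HB]. apply ULim_Lext with (fun s => phi l s + 0 * psi s); [intros; ring|].
 apply ULim_ext with (fun h s => phi l s + h * ((phi (l + h) s - phi l s) / h)).
 { intros; field; auto. }
 apply ULim_plus; [apply ULim_const; auto|]. apply (ULim_mult (fun h _ => h) _ (fun _ => 0)); auto. apply ULim_id. Qed.

Lemma Good_mult phi1 psi1 phi2 psi2 l : Good phi1 psi1 l -> Good phi2 psi2 l ->
  Good (fun mu s => phi1 mu s * phi2 mu s) (fun s => psi1 s * phi2 l s + phi1 l s * psi2 s) l.
Proof. intros G1 G2. pose proof (Good_cont _ _ _ G2) as C2. destruct G1 as [U1 B1]; destruct G2 as [U2 B2].
 split; [|apply UB_mult; auto].
 apply ULim_ext with (fun h s => (phi1 (l + h) s - phi1 l s) / h * phi2 (l + h) s + phi1 l s * ((phi2 (l + h) s - phi2 l s) / h)).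
 { intros; field; auto. }
 apply ULim_plus; apply ULim_mult; auto. apply ULim_const; auto. Qed.
Lemma Good_plus phi1 psi1 phi2 psi2 l : Good phi1 psi1 l -> Good phi2 psi2 l ->
  Good (fun mu s => phi1 mu s + phi2 mu s) (fun s => psi1 s + psi2 s) l.
Proof. intros [U1 B1] [U2 B2]; split; [|apply UB_plus; auto].
 apply ULim_ext with (fun h s => (phi1 (l + h) s - phi1 l s) / h + (phi2 (l + h) s - phi2 l s) / h).
 { intros; field; auto. } apply ULim_plus; auto. Qed.
Lemma Good_opp phi psi l : Good phi psi l -> Good (fun mu s => - phi mu s) (fun s => - psi s) l.
Proof. intros [U B]; split; [|apply UB_opp; auto].
 apply ULim_ext with (fun h s => - ((phi (l + h) s - phi l s) / h)). { intros; field; auto. } apply ULim_opp; auto. Qed.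
Lemma Good_zero l : Good (fun _ _ => 0) (fun _ => 0) l.
Proof. split; [|apply UB_const]. apply ULim_ext with (fun _ _ => 0). { intros; field; auto. } apply ULim_const, UB_const. Qed.
Lemma Good_rsum n phi psi l : (forall k, (k<n)%nat -> Good (phi k) (psi k) l) ->
  Good (fun mu s => rsum n (fun k => phi k mu s)) (fun s => rsum n (fun k => psi k s)) l.
Proof. induction n; intros Hf; simpl. { apply Good_zero. }
 apply (Good_plus (fun mu s => rsum n (fun k => phi k mu s)) _ (phi n)); [apply IHn; intros; apply Hf; lia|apply Hf; lia]. Qed.
Lemma Good_ext phi phi' psi psi' l : (forall mu s, 0 <= s <= T -> phi mu s = phi' mu s) -> (forall s, 0 <= s <= T -> psi s = psi' s) ->
  Good phi psi l -> Good phi' psi' l.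
Proof. intros E1 E2 [U B]; split.
 - apply ULim_Lext with psi; auto. apply ULim_ext with (fun h s => (phi (l + h) s - phi l s) / h); auto. intros; rewrite !E1; auto.
 - apply UB_ext with (phi l); auto. Qed.
Lemma Good_deriv c d l : derivable_pt_lim c l d -> Good (fun mu _ => c mu) (fun _ => d) l.
Proof. intros Hd; split; [|apply UB_const]. split; [apply UB_const|]. intros eps Heps.
 destruct (Hd eps Heps) as [del Hdel]. exists del; split; [apply cond_pos|]. intros; apply Hdel; auto. Qed.

Definition MGood n (X : R -> R -> Mat) (X' : R -> Mat) l :=
  forall a b, (a<n)%nat -> (b<n)%nat -> Good (fun mu s => X mu s a b) (fun s => X' s a b) l.
Lemma MGood_mmul n X X' Y Y' l : MGood n X X' l -> MGood n Y Y' l ->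
  MGood n (fun mu s => mmul n (X mu s) (Y mu s)) (fun s => madd (mmul n (X' s) (Y l s)) (mmul n (X l s) (Y' s))) l.
Proof. intros GX GY a b Ha Hb. unfold madd, mmul.
 apply Good_ext with (fun mu s => rsum n (fun k => X mu s a k * Y mu s k b)) (fun s => rsum n (fun k => X' s a k * Y l s k b + X l s a k * Y' s k b)).
 { intros; reflexivity. } { intros; rewrite rsum_plus; reflexivity. }
 apply (Good_rsum n (fun k mu s => X mu s a k * Y mu s k b) (fun k s => X' s a k * Y l s k b + X l s a k * Y' s k b)).
 intros; apply Good_mult; [apply GX|apply GY]; auto. Qed.
Lemma MGood_mtr n X X' l : MGood n X X' l -> MGood n (fun mu s => mtr (X mu s)) (fun s => mtr (X' s)) l.
Proof. intros G a b Ha Hb; apply G; auto. Qed.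
Lemma MGood_opp n X X' l : MGood n X X' l -> MGood n (fun mu s => mopp (X mu s)) (fun s => mopp (X' s)) l.
Proof. intros G a b Ha Hb; apply Good_opp, G; auto. Qed.

End ULim.

Lemma cont_scal c f x : continuity_pt f x -> continuity_pt (fun s => c * f s) x.
Proof. intros; apply (continuity_pt_mult (fun _ => c) f); auto. apply continuity_pt_const; intros u v; auto. Qed.
Lemma Rint_scal f c a b : a <= b -> (forall x, a <= x <= b -> continuity_pt f x) -> Rint (fun x => c * f x) a b = c * Rint f a b.
Proof. intros. rewrite (Rint_ext _ (fun x => f x + (c - 1) * f x)); auto.
 - rewrite Rint_lin; auto; ring.
 - intros; ring.
 - intros; apply cont_scal; auto.
 - intros. apply (continuity_pt_plus f (fun x => (c - 1) * f x)); auto. apply cont_scal; auto. Qed.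

Lemma Rint_deriv T phi psi l : 0 <= T -> Good T phi psi l -> (forall mu s, 0 <= s <= T -> continuity_pt (phi mu) s) ->
  (forall s, 0 <= s <= T -> continuity_pt psi s) -> derivable_pt_lim (fun mu => Rint (phi mu) 0 T) l (Rint psi 0 T).
Proof. intros HT [[_ HU] _] Hc Hpc eps Heps.
 destruct (HU (eps / (T + 1))) as [del [Hdel Hh]]. { apply Rdiv_lt_0_compat; lra. }
 exists (mkposreal del Hdel). simpl. intros h Hh0 Hhd.
 assert (E : (Rint (phi (l + h)) 0 T - Rint (phi l) 0 T) / h - Rint psi 0 T =
             Rint (fun s => (phi (l + h) s - phi l s) / h - psi s) 0 T).
 { rewrite (Rint_ext (fun s => (phi (l + h) s - phi l s) / h - psi s)
                     (fun s => ((/ h) * phi (l + h) s + (- / h) * phi l s) + (-1) * psi s)); try lra.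
   - rewrite Rint_lin; try lra; auto.
     + rewrite Rint_lin; try lra; auto.
       * rewrite Rint_scal; try lra; auto.
       * intros; apply cont_scal; auto.
     + intros. apply (continuity_pt_plus (fun s => / h * phi (l + h) s) (fun s => - / h * phi l s)); apply cont_scal; auto.
   - intros; field; auto.
   - intros. apply (continuity_pt_minus (fun s => (phi (l + h) s - phi l s) / h) psi); auto.
     apply (continuity_pt_mult (fun s => phi (l + h) s - phi l s) (fun _ => / h)); [|apply continuity_pt_const; intros u v; auto].
     apply (continuity_pt_minus (phi (l + h)) (phi l)); auto.
   - intros. apply (continuity_pt_plus (fun s => / h * phi (l + h) s + - / h * phi l s) (fun s => -1 * psi s)); [|apply cont_scal; auto].
     apply (continuity_pt_plus (fun s => / h * phi (l + h) s) (fun s => - / h * phi l s)); apply cont_scal; auto. }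
 rewrite E. eapply Rle_lt_trans.
 - apply (Rint_bound _ 0 T (eps / (T + 1))); try lra.
   + intros. apply (continuity_pt_minus (fun s => (phi (l + h) s - phi l s) / h) psi); auto.
     apply (continuity_pt_mult (fun s => phi (l + h) s - phi l s) (fun _ => / h)); [|apply continuity_pt_const; intros u v; auto].
     apply (continuity_pt_minus (phi (l + h)) (phi l)); auto.
   + intros; left; apply Hh; auto.
 - rewrite Rminus_0_r. unfold Rdiv. rewrite Rmult_assoc. rewrite <- (Rmult_1_r eps) at 2. apply Rmult_lt_compat_l; auto.
   apply (Rmult_lt_reg_l (T + 1)); [lra|]. rewrite <- Rmult_assoc, Rinv_r; lra. Qed.


Lemma rsum_const1 n : rsum n (fun _ => 1) = INR n.
Proof. induction n; simpl rsum; [simpl; ring|rewrite IHn, S_INR; ring]. Qed.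

Lemma exp_le x y : x <= y -> exp x <= exp y.
Proof. intros [H|H]; [left; apply exp_increasing; auto|subst; lra]. Qed.
Lemma Jm_bound m a b : Rabs (Jm m a b) <= 1.
Proof. unfold Jm. repeat match goal with |- context [if ?c then _ else _] => destruct c end;
 unfold Rabs; destruct (Rcase_abs _); lra. Qed.

Lemma mvt_quot f f' l h : h <> 0 -> (forall x, derivable_pt_lim f x (f' x)) ->
  exists c, Rabs (c - l) < Rabs h /\ (f (l + h) - f l) / h = f' c.
Proof. intros Hh Hd. destruct (Rlt_dec 0 h) as [Hp|Hn].
 - destruct (MVT_cor2 f f' l (l + h)) as [c [Hc1 Hc2]]; [lra|intros; auto|].
   exists c; split. { rewrite !Rabs_right; lra. } rewrite Hc1; field; lra.
 - assert (h < 0) by lra. destruct (MVT_cor2 f f' (l + h) l) as [c [Hc1 Hc2]]; [lra|intros; auto|].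
   exists c; split. { rewrite Rabs_left, Rabs_left1; lra. }
   replace (f (l + h) - f l) with (- (f l - f (l + h))) by ring. rewrite Hc1; field; lra. Qed.

Lemma ULim_to_deriv T c d l : 0 <= T -> ULim T (fun h _ => (c (l + h) - c l) / h) (fun _ => d) -> derivable_pt_lim c l d.
Proof. intros HT [_ HU] eps Heps. destruct (HU eps Heps) as [del [Hdel Hh]]. exists (mkposreal del Hdel). simpl.
 intros h Hh0 Hhd. apply (Hh h Hh0 Hhd 0). lra. Qed.

Definition MULim T n (X : R -> R -> Mat) (X0 : R -> Mat) :=
  forall a b, (a<n)%nat -> (b<n)%nat -> ULim T (fun h s => X h s a b) (fun s => X0 s a b).
Lemma MULim_mmul T n X X0 Y Y0 : MULim T n X X0 -> MULim T n Y Y0 ->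
  MULim T n (fun h s => mmul n (X h s) (Y h s)) (fun s => mmul n (X0 s) (Y0 s)).
Proof. intros HX HY a b Ha Hb. unfold mmul.
 apply (ULim_rsum T n (fun q h s => X h s a q * Y h s q b) (fun q s => X0 s a q * Y0 s q b)).
 intros; apply ULim_mult; [apply HX|apply HY]; auto. Qed.
Lemma MULim_mtr T n X X0 : MULim T n X X0 -> MULim T n (fun h s => mtr (X h s)) (fun s => mtr (X0 s)).
Proof. intros HX a b Ha Hb; apply HX; auto. Qed.
Lemma MULim_mopp T n X X0 : MULim T n X X0 -> MULim T n (fun h s => mopp (X h s)) (fun s => mopp (X0 s)).
Proof. intros HX a b Ha Hb; apply ULim_opp, HX; auto. Qed.

Lemma mid_sym i j : mid i j = mid j i.
Proof. unfold mid. destruct (Nat.eqb_spec i j); destruct (Nat.eqb_spec j i); auto; lia. Qed.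

Lemma F2_rinv m N M s : (forall i j, (i < 2*m)%nat -> (j < 2*m)%nat -> mmul (2*m) (mtr (F2B m N M s)) (F3B m N M s) i j = mid i j) ->
  forall i j, (i < 2*m)%nat -> (j < 2*m)%nat -> mmul (2*m) (F2B m N M s) (mtr (F3B m N M s)) i j = mid i j.
Proof. intros HF. set (k := (2*m)%nat) in *. set (F2 := F2B m N M s). set (F3 := F3B m N M s). set (P := F3B m N M (-s)).
 assert (HP : forall i j, (i<k)%nat -> (j<k)%nat -> mmul k F3 P i j = mid i j) by (intros; apply F3_inv; auto).
 assert (E2 : forall i j, (i<k)%nat -> (j<k)%nat -> F2 i j = mtr P i j).
 { intros i j Hi Hj. rewrite <- (mmul_mid_l k F2 i j Hi).
   rewrite (mmul_ext_l k mid (mtr (mmul k F3 P))) by (auto; intros; unfold mtr; rewrite HP, mid_sym; auto).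
   rewrite mtr_mmul, mmul_assoc.
   rewrite (mmul_ext_r k (mtr P) (mmul k (mtr F3) F2) mid) by (auto; intros a b Ha Hb;
     change (mmul k (mtr F3) F2 a b) with (mmul k (mtr F3) (mtr (mtr F2)) a b); rewrite <- mtr_mmul; unfold mtr at 1; rewrite HF, mid_sym; auto).
   rewrite mmul_mid_r; auto. }
 intros i j Hi Hj. rewrite (mmul_ext_l k F2 (mtr P)) by auto. rewrite <- mtr_mmul. unfold mtr at 1. rewrite HP, mid_sym; auto. Qed.

Section Main.
Variables (m : nat) (N M dN dM : R -> Mat) (H : R).
Hypothesis hH : 0 <= H.
Hypothesis hN : forall l i j, (i < 2 * m)%nat -> (j < 2 * m)%nat ->
        derivable_pt_lim (fun x => N x i j) l (dN l i j).
Hypothesis hM : forall l i j, (i < 2 * m)%nat -> (j < 2 * m)%nat ->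
        derivable_pt_lim (fun x => M x i j) l (dM l i j).
Hypothesis hsym : forall l i j, (i < 2 * m)%nat -> (j < 2 * m)%nat -> M l i j = M l j i.
Hypothesis hF : forall l s, 0 <= s <= H -> forall i j, (i < 2 * m)%nat -> (j < 2 * m)%nat ->
        mmul (2 * m) (mtr (F2B m (N l) (M l) s)) (F3B m (N l) (M l) s) i j = mid i j.
Hypothesis hdF3 : forall l s, 0 <= s <= H -> forall i j, (i < 2 * m)%nat -> (j < 2 * m)%nat ->
        derivable_pt_lim (fun x => F3B m (N x) (M x) s i j) l
          (- mmul (2 * m) (Jm m) (G2B m (N l) (M l) s) i j).

Let k := (2 * m)%nat.
Let n6 := (6 * m)%nat.
Let A mu := bigA m (N mu) (M mu).

Lemma A_cont l i j : (i < n6)%nat -> (j < n6)%nat -> continuity_pt (fun mu => A mu i j) l.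
Proof. intros Hi Hj. unfold A, n6 in *. unfold bigA; cbv zeta;
  repeat match goal with |- context [Nat.ltb ?a ?b] => destruct (Nat.ltb_spec a b) end;
  try (apply continuity_pt_const; intros u v; reflexivity).
 - apply (continuity_pt_opp (fun mu => N mu j i)). eapply dl_cont; apply hN; lia.
 - unfold mmul. apply (cont_rsum (2*m) (fun q mu => M mu i q * Jm m q (j - 2*m)%nat)). intros.
   apply cont_mult; [eapply dl_cont; apply hM; lia|apply continuity_pt_const; intros u v; reflexivity].
 - apply (continuity_pt_opp (fun mu => N mu (j - 2*m)%nat (i - 2*m)%nat)). eapply dl_cont; apply hN; lia.
 - eapply dl_cont; apply hM; lia.
 - eapply dl_cont; apply hN; lia. Qed.

Lemma cont_eps f l : continuity_pt f l -> forall eps, 0 < eps -> exists del, 0 < del /\ forall x, Rabs (x - l) < del -> Rabs (f x - f l) < eps.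
Proof. intros Hc eps Heps. destruct (Hc eps Heps) as [del [Hdel Hx]]. exists del; split; auto.
 intros x Hxl. destruct (Req_dec x l) as [->|Hne]. { rewrite Rminus_diag, Rabs_R0; auto. }
 apply (Hx x). split; [split; [exact I|auto]|exact Hxl]. Qed.

Lemma dA_small l : forall eps, 0 < eps -> exists del, 0 < del /\ forall mu, Rabs (mu - l) < del -> nrm n6 (msub (A mu) (A l)) < eps.
Proof. intros eps Heps.
 assert (Hc : continuity_pt (fun mu => nrm n6 (msub (A mu) (A l))) l).
 { unfold nrm. apply (cont_rsum n6 (fun a mu => rsum n6 (fun b => Rabs (msub (A mu) (A l) a b)))). intros a Ha.
   apply (cont_rsum n6 (fun b mu => Rabs (msub (A mu) (A l) a b))). intros b Hb.
   apply (continuity_pt_comp (fun mu => msub (A mu) (A l) a b) Rabs); [|apply Rcontinuity_abs].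
   unfold msub. apply (continuity_pt_minus (fun mu => A mu a b) (fun _ => A l a b)); [apply A_cont; auto|apply continuity_pt_const; intros u v; auto]. }
 destruct (cont_eps _ _ Hc eps Heps) as [del [Hdel Hx]]. exists del; split; auto. intros mu Hmu.
 specialize (Hx mu Hmu). assert (Z : nrm n6 (msub (A l) (A l)) = 0).
 { unfold nrm, msub. apply rsum_zero'; intros; apply rsum_zero'; intros. rewrite Rminus_diag, Rabs_R0; auto. }
 rewrite Z, Rminus_0_r in Hx. eapply Rle_lt_trans; [apply RRle_abs|auto]. Qed.

Let E mu s := Ephi m (N mu) (M mu) s.

Lemma E_equi l : forall eps, 0 < eps -> exists del, 0 < del /\ forall mu, Rabs (mu - l) < del ->
  forall s, 0 <= s <= H -> forall i j, (i < n6)%nat -> (j < n6)%nat -> Rabs (E mu s i j - E l s i j) < eps.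
Proof. intros eps Heps. set (R := nrm n6 (A l)). assert (HR : 0 <= R) by apply nrm_nonneg.
 set (e := exp (H * (R + 1))). assert (He : 0 < e) by apply exp_pos.
 set (eps' := Rmin 1 (eps / ((H + 1) * e))).
 assert (He' : 0 < eps') by (apply Rmin_pos; [lra|apply Rdiv_lt_0_compat; [lra|apply Rmult_lt_0_compat; lra]]).
 destruct (dA_small l eps' He') as [del [Hdel Hd]]. exists del; split; auto. intros mu Hmu s Hs i j Hi Hj.
 specialize (Hd mu Hmu).
 assert (HA : nrm n6 (A mu) <= R + 1). { pose proof (nrm_tri n6 (A mu) (A l)) as Ht. assert (eps' <= 1) by apply Rmin_l. fold R in Ht. lra. }
 assert (B1 : nrm n6 (mscal s (A mu)) <= H * (R + 1)). { rewrite nrm_mscal, Rabs_right by lra. apply Rmult_le_compat; try lra; apply nrm_nonneg. }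
 assert (B2 : nrm n6 (mscal s (A l)) <= H * (R + 1)). { rewrite nrm_mscal, Rabs_right by lra. fold R. apply Rmult_le_compat; lra. }
 unfold E. change (Ephi m (N mu) (M mu) s) with (mexp n6 (mscal s (A mu))). change (Ephi m (N l) (M l) s) with (mexp n6 (mscal s (A l))).
 eapply Rle_lt_trans; [apply (mexp_lip n6 _ _ (H * (R + 1))); auto|]. fold e.
 rewrite msub_mscal, nrm_mscal, Rabs_right by lra.
 assert (eps' <= eps / ((H + 1) * e)) by apply Rmin_r.
 assert (s * nrm n6 (msub (A mu) (A l)) * e <= H * eps' * e).
 { apply Rmult_le_compat_r; [lra|]. apply Rmult_le_compat; try lra; apply nrm_nonneg. }
 assert (H * eps' * e <= H * (eps / ((H + 1) * e)) * e).
 { apply Rmult_le_compat_r; [lra|]. apply Rmult_le_compat_l; lra. }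
 assert (H * (eps / ((H + 1) * e)) * e = eps * (H / (H + 1))) by (field; lra).
 assert (H / (H + 1) < 1). { apply (Rmult_lt_reg_r (H + 1)); [lra|]. unfold Rdiv; rewrite Rmult_assoc, Rinv_l; lra. }
 nra. Qed.

Lemma E_bound l : exists del C, 0 < del /\ forall mu, Rabs (mu - l) < del ->
  forall s, 0 <= s <= H -> forall i j, (i < n6)%nat -> (j < n6)%nat -> Rabs (E mu s i j) <= C.
Proof. set (R := nrm n6 (A l)). destruct (dA_small l 1 Rlt_0_1) as [del [Hdel Hd]].
 exists del, (exp (H * (R + 1))); split; auto. intros mu Hmu s Hs i j Hi Hj.
 specialize (Hd mu Hmu).
 assert (HA : nrm n6 (A mu) <= R + 1). { pose proof (nrm_tri n6 (A mu) (A l)) as Ht. fold R in Ht. lra. }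
 unfold E. change (Ephi m (N mu) (M mu) s) with (mexp n6 (mscal s (A mu))).
 eapply Rle_trans; [apply mexp_bound; auto|]. apply exp_le. rewrite nrm_mscal, Rabs_right by lra.
 pose proof (nrm_nonneg n6 (A mu)). pose proof (nrm_nonneg n6 (A l)). apply Rmult_le_compat; lra. Qed.

Lemma G2_E mu s i j : G2B m (N mu) (M mu) s i j = E mu s (1*k+i)%nat (2*k+j)%nat. Proof. reflexivity. Qed.
Lemma F3_E mu s i j : F3B m (N mu) (M mu) s i j = E mu s (2*k+i)%nat (2*k+j)%nat. Proof. reflexivity. Qed.

Lemma E_UB l a b : (a < n6)%nat -> (b < n6)%nat -> UB H (fun s => E l s a b).
Proof. intros. destruct (E_bound l) as [del [C [Hdel HB]]]. exists C. intros s Hs. apply HB; auto. rewrite Rminus_diag, Rabs_R0; auto. Qed.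

Lemma F3_good l : MGood H k (fun mu s => F3B m (N mu) (M mu) s) (fun s => mopp (mmul k (Jm m) (G2B m (N l) (M l) s))) l.
Proof. intros a b Ha Hb. split; [split|].
 - unfold mopp, mmul. apply UB_opp. apply (UB_rsum H k (fun q s => Jm m a q * G2B m (N l) (M l) s q b)). intros q Hq.
   apply UB_mult; [apply UB_const|]. apply (E_UB l); unfold k, n6 in *; lia.
 - intros eps Heps. destruct (E_equi l (eps / (INR k + 1))) as [del [Hdel Heq]]. { apply Rdiv_lt_0_compat; auto. pose proof (pos_INR k); lra. }
   exists del; split; auto. intros h Hh Hhd s Hs.
   destruct (mvt_quot (fun x => F3B m (N x) (M x) s a b) (fun x => - mmul k (Jm m) (G2B m (N x) (M x) s) a b) l h Hh
     (fun x => hdF3 x s Hs a b Ha Hb)) as [c [Hc Hq]].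
   rewrite Hq. unfold mopp. replace (- mmul k (Jm m) (G2B m (N c) (M c) s) a b - - mmul k (Jm m) (G2B m (N l) (M l) s) a b)
     with (- rsum k (fun q => Jm m a q * (G2B m (N c) (M c) s q b - G2B m (N l) (M l) s q b))) by (unfold mmul; rewrite (rsum_ext k _ (fun q => Jm m a q * G2B m (N c) (M c) s q b - Jm m a q * G2B m (N l) (M l) s q b)) by (intros; ring); rewrite rsum_minus; ring).
   rewrite Rabs_Ropp. eapply Rle_lt_trans; [apply rsum_abs|].
   apply Rle_lt_trans with (rsum k (fun _ => eps / (INR k + 1))).
   + apply rsum_le; intros q Hq0. rewrite Rabs_mult. rewrite <- (Rmult_1_l (eps / _)). apply Rmult_le_compat; [apply Rabs_pos|apply Rabs_pos|apply Jm_bound|].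
     rewrite !G2_E. left; apply Heq; [lra|auto|unfold k, n6 in *; lia|unfold k, n6 in *; lia].
   + rewrite <- (Rmult_1_r (eps / _)), rsum_scal, rsum_const1. pose proof (pos_INR k).
     apply (Rmult_lt_reg_r (INR k + 1)); [lra|]. unfold Rdiv. replace (eps * / (INR k + 1) * INR k * (INR k + 1)) with (eps * INR k) by (field; lra). nra.
 - apply (E_UB l (2*k+a) (2*k+b)); unfold k, n6 in *; lia.
Qed.


Lemma rinv_at mu i j : (i<k)%nat -> (j<k)%nat -> mmul k (F2B m (N mu) (M mu) H) (mtr (F3B m (N mu) (M mu) H)) i j = mid i j.
Proof. intros; apply F2_rinv; auto. intros; apply hF; auto; lra. Qed.
Lemma linv_at mu i j : (i<k)%nat -> (j<k)%nat -> mmul k (mtr (F2B m (N mu) (M mu) H)) (F3B m (N mu) (M mu) H) i j = mid i j.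
Proof. intros; apply hF; auto; lra. Qed.

Lemma linv_at2 mu i j : (i<k)%nat -> (j<k)%nat -> mmul k (mtr (F3B m (N mu) (M mu) H)) (F2B m (N mu) (M mu) H) i j = mid i j.
Proof. intros. change (F2B m (N mu) (M mu) H) with (mtr (mtr (F2B m (N mu) (M mu) H))). rewrite <- mtr_mmul.
 unfold mtr at 1. rewrite linv_at, mid_sym; auto. Qed.

Definition F3d l s := mopp (mmul k (Jm m) (G2B m (N l) (M l) s)).

Lemma F2_deriv l a b : (a<k)%nat -> (b<k)%nat ->
  derivable_pt_lim (fun mu => F2B m (N mu) (M mu) H a b) l
    (mopp (mmul k (mmul k (F2B m (N l) (M l) H) (mtr (F3d l H))) (F2B m (N l) (M l) H)) a b).
Proof. intros Ha Hb. apply (ULim_to_deriv H); auto.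
 set (F2 := fun mu => F2B m (N mu) (M mu) H). set (F3 := fun mu => F3B m (N mu) (M mu) H).
 set (Q := fun h i j => (F3 (l + h) i j - F3 l i j) / h).
 apply ULim_ext with (fun h s => mopp (mmul k (mmul k (F2 (l + h)) (mtr (Q h))) (F2 l)) a b).
 - intros h s Hh Hs. assert (EQ : mtr (Q h) = mscal (/ h) (msub (mtr (F3 (l + h))) (mtr (F3 l)))).
   { unfold Q, mtr, mscal, msub. do 2 (apply functional_extensionality; intro). unfold Rdiv; ring. }
   rewrite EQ, mmul_mscal_r, mmul_msub_r, mmul_mscal_l, mmul_msub_l. unfold mopp, mscal, msub.
   rewrite (mmul_ext_l k (mmul k (F2 (l + h)) (mtr (F3 (l + h)))) mid) by (auto; intros; apply rinv_at; auto).
   rewrite mmul_assoc. rewrite (mmul_ext_r k (F2 (l + h)) (mmul k (mtr (F3 l)) (F2 l)) mid) by (auto; intros; apply linv_at2; auto).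
   rewrite mmul_mid_l, mmul_mid_r; auto. unfold F2; field; auto.
 - apply (MULim_mopp H k (fun h s => mmul k (mmul k (F2 (l + h)) (mtr (Q h))) (F2 l))); auto.
   apply (MULim_mmul H k (fun h s => mmul k (F2 (l + h)) (mtr (Q h))) _ (fun _ _ => F2 l)).
   + apply (MULim_mmul H k (fun h s => F2 (l + h)) (fun _ => F2 l) (fun h s => mtr (Q h))).
     * intros i j Hi Hj. split; [apply UB_const|]. intros eps Heps. destruct (E_equi l eps Heps) as [del [Hdel Heq]].
       exists del; split; auto. intros h Hh Hhd s Hs. unfold F2. apply (Heq (l + h)); [replace (l + h - l) with h by ring; auto|lra|unfold k, n6 in *; lia|unfold k, n6 in *; lia].
     * apply (MULim_mtr H k (fun h s => Q h) (fun _ => F3d l H)). intros i j Hi Hj.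
       destruct (Good_deriv H (fun mu => F3 mu i j) (F3d l H i j) l) as [HU _]. { unfold F3, F3d, mopp. apply hdF3; auto; lra. }
       exact HU.
   + intros i j Hi Hj. apply ULim_const, UB_const.
Qed.


Definition Kf mu : Mat := fun p q => Rint (fun s => mmul k (mmul k (mtr (F3B m (N mu) (M mu) s)) (M mu)) (F3B m (N mu) (M mu) s) p q) 0 H.

Definition psiK l s := madd (mmul k (madd (mmul k (mtr (F3d l s)) (M l)) (mmul k (mtr (F3B m (N l) (M l) s)) (dM l))) (F3B m (N l) (M l) s))
   (mmul k (mmul k (mtr (F3B m (N l) (M l) s)) (M l)) (F3d l s)).

Lemma M_good l : MGood H k (fun mu s => M mu) (fun s => dM l) l.
Proof. intros a b Ha Hb. apply (Good_deriv H (fun mu => M mu a b)). apply hM; auto. Qed.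

Lemma integrand_good l : MGood H k (fun mu s => mmul k (mmul k (mtr (F3B m (N mu) (M mu) s)) (M mu)) (F3B m (N mu) (M mu) s)) (psiK l) l.
Proof. unfold psiK. apply (MGood_mmul H k (fun mu s => mmul k (mtr (F3B m (N mu) (M mu) s)) (M mu)) _ (fun mu s => F3B m (N mu) (M mu) s)).
 - apply (MGood_mmul H k (fun mu s => mtr (F3B m (N mu) (M mu) s)) _ (fun mu s => M mu)).
   + apply (MGood_mtr H k (fun mu s => F3B m (N mu) (M mu) s)). apply F3_good.
   + apply M_good.
 - apply F3_good. Qed.

Lemma F3l_cont l s a b : (a<k)%nat -> (b<k)%nat -> continuity_pt (fun s => F3B m (N l) (M l) s a b) s.
Proof. intros; apply F3_cont; auto. Qed.
Lemma F3d_cont l s a b : (a<k)%nat -> (b<k)%nat -> continuity_pt (fun s => F3d l s a b) s.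
Proof. intros. unfold F3d, mopp. apply (continuity_pt_opp (fun s => mmul k (Jm m) (G2B m (N l) (M l) s) a b)).
 apply cont_mmul; auto; intros; [apply cst_cont|apply G2_cont; auto]. Qed.
Lemma integrand_cont mu s p q : (p<k)%nat -> (q<k)%nat ->
  continuity_pt (fun s => mmul k (mmul k (mtr (F3B m (N mu) (M mu) s)) (M mu)) (F3B m (N mu) (M mu) s) p q) s.
Proof. intros. apply cont_mmul; auto; intros; [apply cont_mmul; auto; intros; [apply F3l_cont; auto|apply cst_cont]|apply F3l_cont; auto]. Qed.
Lemma psiK_cont l s p q : (p<k)%nat -> (q<k)%nat -> continuity_pt (fun s => psiK l s p q) s.
Proof. intros. unfold psiK, madd. apply (continuity_pt_plus (fun s => mmul k _ (F3B m (N l) (M l) s) p q) (fun s => mmul k _ (F3d l s) p q)).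
 - apply cont_mmul; auto; intros; [|apply F3l_cont; auto].
   apply (continuity_pt_plus (fun s => mmul k (mtr (F3d l s)) (M l) a b) (fun s => mmul k (mtr (F3B m (N l) (M l) s)) (dM l) a b)).
   + apply cont_mmul; auto; intros; [apply F3d_cont; auto|apply cst_cont].
   + apply cont_mmul; auto; intros; [apply F3l_cont; auto|apply cst_cont].
 - apply cont_mmul; auto; intros; [apply cont_mmul; auto; intros; [apply F3l_cont; auto|apply cst_cont]|apply F3d_cont; auto]. Qed.

Lemma K_deriv l p q : (p<k)%nat -> (q<k)%nat -> derivable_pt_lim (fun mu => Kf mu p q) l (Rint (fun s => psiK l s p q) 0 H).
Proof. intros. unfold Kf. apply (Rint_deriv H (fun mu s => mmul k (mmul k (mtr (F3B m (N mu) (M mu) s)) (M mu)) (F3B m (N mu) (M mu) s) p q)); auto.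
 - apply integrand_good; auto.
 - intros; apply integrand_cont; auto.
 - intros; apply psiK_cont; auto. Qed.


Lemma trans_sym X Y S i j : (forall a b, (a<k)%nat -> (b<k)%nat -> S a b = S b a) -> (i<k)%nat -> (j<k)%nat ->
  mmul k (mmul k (mtr X) S) Y i j = mmul k (mmul k (mtr Y) S) X j i.
Proof. intros HS Hi Hj. change (mmul k (mmul k (mtr X) S) Y i j) with (mtr (mmul k (mmul k (mtr X) S) Y) j i).
 rewrite mtr_mmul, mtr_mmul, mtr_mtr, <- mmul_assoc. apply mmul_ext_l; auto.
 intros a b Ha Hb. apply mmul_ext_r; auto. intros; unfold mtr; apply HS; auto. Qed.

Lemma T3_eq l s p q : mmul k (mmul k (mtr (F3B m (N l) (M l) s)) (M l)) (F3d l s) p q =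
  - mmul k (mtr (F3B m (N l) (M l) s)) (mmul k (mmul k (M l) (Jm m)) (G2B m (N l) (M l) s)) p q.
Proof. unfold F3d. rewrite mmul_mopp_r, !mmul_assoc. reflexivity. Qed.

Lemma I2_cont l s p q : (p<k)%nat -> (q<k)%nat ->
  continuity_pt (fun s => mmul k (mtr (F3B m (N l) (M l) s)) (mmul k (mmul k (M l) (Jm m)) (G2B m (N l) (M l) s)) p q) s.
Proof. intros. apply cont_mmul; auto; intros; [apply F3l_cont; auto|apply cont_mmul; auto; intros; [apply cst_cont|apply G2_cont; auto]]. Qed.

Lemma T3_int l p q : (p<k)%nat -> (q<k)%nat ->
  Rint (fun s => mmul k (mmul k (mtr (F3B m (N l) (M l) s)) (M l)) (F3d l s) p q) 0 H =
  - mmul k (mtr (F3B m (N l) (M l) H)) (gammaB m (N l) (M l) H) p q.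
Proof. intros. pose proof (I2 m (N l) (M l) H p q hH H0 H1) as HI. change (2*m)%nat with k in HI. rewrite HI. rewrite <- Rint_opp; auto; [|intros; apply I2_cont; auto].
 apply Rint_ext; auto.
 - intros; apply T3_eq.
 - intros; apply cont_mmul; auto; intros; [apply cont_mmul; auto; intros; [apply F3l_cont; auto|apply cst_cont]|apply F3d_cont; auto].
 - intros. apply (continuity_pt_opp (fun s => mmul k (mtr (F3B m (N l) (M l) s)) (mmul k (mmul k (M l) (Jm m)) (G2B m (N l) (M l) s)) p q)). apply I2_cont; auto. Qed.

Lemma psiK_int l p q : (p<k)%nat -> (q<k)%nat ->
  Rint (fun s => psiK l s p q) 0 H =
  - mmul k (mtr (F3B m (N l) (M l) H)) (gammaB m (N l) (M l) H) q p
  - mmul k (mtr (F3B m (N l) (M l) H)) (gammaB m (N l) (M l) H) p q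
  + Rint (fun s => mmul k (mmul k (mtr (F3B m (N l) (M l) s)) (dM l)) (F3B m (N l) (M l) s) p q) 0 H.
Proof. intros Hp Hq.
 set (T1 := fun s => mmul k (mmul k (mtr (F3d l s)) (M l)) (F3B m (N l) (M l) s) p q).
 set (T2 := fun s => mmul k (mmul k (mtr (F3B m (N l) (M l) s)) (dM l)) (F3B m (N l) (M l) s) p q).
 set (T3 := fun s => mmul k (mmul k (mtr (F3B m (N l) (M l) s)) (M l)) (F3d l s) p q).
 assert (C1 : forall s, 0 <= s <= H -> continuity_pt T1 s).
 { intros; unfold T1; apply cont_mmul; auto; intros; [apply cont_mmul; auto; intros; [apply F3d_cont; auto|apply cst_cont]|apply F3l_cont; auto]. }
 assert (C2 : forall s, 0 <= s <= H -> continuity_pt T2 s).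
 { intros; unfold T2; apply cont_mmul; auto; intros; [apply cont_mmul; auto; intros; [apply F3l_cont; auto|apply cst_cont]|apply F3l_cont; auto]. }
 assert (C3 : forall s, 0 <= s <= H -> continuity_pt T3 s).
 { intros; unfold T3; apply cont_mmul; auto; intros; [apply cont_mmul; auto; intros; [apply F3l_cont; auto|apply cst_cont]|apply F3d_cont; auto]. }
 rewrite (Rint_ext _ (fun s => (T1 s + T2 s) + T3 s)); auto.
 - rewrite Rint_plus; auto. 2:{ intros; apply (continuity_pt_plus T1 T2); auto. }
   rewrite Rint_plus; auto. unfold T3. rewrite T3_int; auto.
   rewrite (Rint_ext T1 (fun s => mmul k (mmul k (mtr (F3B m (N l) (M l) s)) (M l)) (F3d l s) q p)); auto.
   + rewrite T3_int; auto. unfold T2. ring.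
   + intros. unfold T1. apply trans_sym; auto.
   + intros; apply cont_mmul; auto; intros; [apply cont_mmul; auto; intros; [apply F3l_cont; auto|apply cst_cont]|apply F3d_cont; auto].
 - intros. unfold psiK. unfold madd at 1. rewrite mmul_madd_l. reflexivity.
 - intros; apply psiK_cont; auto.
 - intros. apply (continuity_pt_plus (fun s => T1 s + T2 s) T3); auto. apply (continuity_pt_plus T1 T2); auto. Qed.


Lemma G2_FK mu a b : (a<k)%nat -> (b<k)%nat ->
  G2B m (N mu) (M mu) H a b = mmul k (F2B m (N mu) (M mu) H) (Kf mu) a b.
Proof. intros Ha Hb. rewrite <- (mmul_mid_l k (G2B m (N mu) (M mu) H) a b Ha).
 rewrite (mmul_ext_l k mid (mmul k (F2B m (N mu) (M mu) H) (mtr (F3B m (N mu) (M mu) H)))) by (auto; intros; symmetry; apply rinv_at; auto).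
 rewrite mmul_assoc. apply mmul_ext_r; auto. intros p q Hp Hq.
 pose proof (I1 m (N mu) (M mu) H p q hH Hp Hq) as HI. change (2*m)%nat with k in HI. rewrite HI. reflexivity. Qed.

Definition psiF2 l := mopp (mmul k (mmul k (F2B m (N l) (M l) H) (mtr (F3d l H))) (F2B m (N l) (M l) H)).
Definition psiKm l : Mat := fun p q => Rint (fun s => psiK l s p q) 0 H.

Lemma final_deriv l i j : (i<k)%nat -> (j<k)%nat ->
  derivable_pt_lim (fun mu => G2B m (N mu) (M mu) H i j) l
    (madd (mmul k (psiF2 l) (Kf l)) (mmul k (F2B m (N l) (M l) H) (psiKm l)) i j).
Proof. intros Hi Hj.
 assert (G : Good H (fun mu s => mmul k (F2B m (N mu) (M mu) H) (Kf mu) i j)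
                    (fun s => madd (mmul k (psiF2 l) (Kf l)) (mmul k (F2B m (N l) (M l) H) (psiKm l)) i j) l).
 { apply (MGood_mmul H k (fun mu s => F2B m (N mu) (M mu) H) (fun s => psiF2 l) (fun mu s => Kf mu) (fun s => psiKm l)); auto.
   - intros a b Ha Hb. apply (Good_deriv H (fun mu => F2B m (N mu) (M mu) H a b)). apply F2_deriv; auto.
   - intros a b Ha Hb. apply (Good_deriv H (fun mu => Kf mu a b)). apply K_deriv; auto. }
 destruct G as [GU _].
 pose proof (ULim_to_deriv H (fun mu => mmul k (F2B m (N mu) (M mu) H) (Kf mu) i j)
   (madd (mmul k (psiF2 l) (Kf l)) (mmul k (F2B m (N l) (M l) H) (psiKm l)) i j) l hH GU) as D.
 eapply dl_ext; [|exact D]. intros; symmetry; apply G2_FK; auto. Qed.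

Lemma value_eq l i j : (i<k)%nat -> (j<k)%nat ->
  madd (mmul k (psiF2 l) (Kf l)) (mmul k (F2B m (N l) (M l) H) (psiKm l)) i j =
  (let n := (2 * m)%nat in
       let F2H := F2B m (N l) (M l) H in
       let G2H := G2B m (N l) (M l) H in
       let F3H := F3B m (N l) (M l) H in
       let P := mmul n (mtr F3H) (gammaB m (N l) (M l) H) in
       let Int : Mat := fun p q =>
         Rint (fun s => mmul n (mmul n (mtr (F3B m (N l) (M l) s)) (dM l))
                              (F3B m (N l) (M l) s) p q) 0 H in
       let W := msub (madd (msub (mopp (mtr P)) P) Int)
                     (mmul n (mtr (mopp (mmul n (Jm m) G2H))) G2H) in
       mmul n F2H W i j).
Proof. intros Hi Hj. cbv zeta. change (2*m)%nat with k.
 set (F2 := F2B m (N l) (M l) H). set (G2 := G2B m (N l) (M l) H).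
 set (P := mmul k (mtr (F3B m (N l) (M l) H)) (gammaB m (N l) (M l) H)).
 set (Int := fun p q => Rint (fun s => mmul k (mmul k (mtr (F3B m (N l) (M l) s)) (dM l)) (F3B m (N l) (M l) s) p q) 0 H).
 rewrite mmul_msub_r. unfold madd at 1.
 assert (E1 : forall p q, (p<k)%nat -> (q<k)%nat -> psiKm l p q = madd (msub (mopp (mtr P)) P) Int p q).
 { intros p q Hp Hq. unfold psiKm. rewrite psiK_int; auto. }
 rewrite (mmul_ext_r k F2 (psiKm l) (madd (msub (mopp (mtr P)) P) Int) i j Hj E1).
 unfold psiF2. rewrite mmul_mopp_l, mmul_assoc.
 assert (E2 : forall a b, (a<k)%nat -> (b<k)%nat -> mmul k F2 (Kf l) a b = G2 a b).
 { intros a b Ha Hb. unfold G2. rewrite G2_FK; auto. }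
 fold F2. unfold mopp at 1.
 rewrite (mmul_ext_r k (mmul k F2 (mtr (F3d l H))) (mmul k F2 (Kf l)) G2 i j Hj E2).
 rewrite mmul_assoc. unfold F3d. fold G2. unfold msub. ring. Qed.

End Main.

Theorem lemmaA2_proof (m : nat) (N M dN dM : R -> Mat) (H : R)
  (hH : 0 <= H)
  (hN : forall l i j, (i < 2 * m)%nat -> (j < 2 * m)%nat ->
        derivable_pt_lim (fun x => N x i j) l (dN l i j))
  (hM : forall l i j, (i < 2 * m)%nat -> (j < 2 * m)%nat ->
        derivable_pt_lim (fun x => M x i j) l (dM l i j))
  (hsym : forall l i j, (i < 2 * m)%nat -> (j < 2 * m)%nat ->
        M l i j = M l j i)
  (hF : forall l s, 0 <= s <= H -> forall i j, (i < 2 * m)%nat -> (j < 2 * m)%nat ->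
        mmul (2 * m) (mtr (F2B m (N l) (M l) s)) (F3B m (N l) (M l) s) i j = mid i j)
  (hdF3 : forall l s, 0 <= s <= H -> forall i j, (i < 2 * m)%nat -> (j < 2 * m)%nat ->
        derivable_pt_lim (fun x => F3B m (N x) (M x) s i j) l
          (- mmul (2 * m) (Jm m) (G2B m (N l) (M l) s) i j)) :
  forall l i j, (i < 2 * m)%nat -> (j < 2 * m)%nat ->
    derivable_pt_lim (fun x => G2B m (N x) (M x) H i j) l
      (let n := (2 * m)%nat in
       let F2H := F2B m (N l) (M l) H in
       let G2H := G2B m (N l) (M l) H in
       let F3H := F3B m (N l) (M l) H in
       let P := mmul n (mtr F3H) (gammaB m (N l) (M l) H) in
       let Int : Mat := fun p q =>
         Rint (fun s => mmul n (mmul n (mtr (F3B m (N l) (M l) s)) (dM l))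
                              (F3B m (N l) (M l) s) p q) 0 H in
       let W := msub (madd (msub (mopp (mtr P)) P) Int)
                     (mmul n (mtr (mopp (mmul n (Jm m) G2H))) G2H) in
       mmul n F2H W i j).
Proof. intros l i j Hi Hj. rewrite <- (value_eq m N M dM H hH hsym hF l i j Hi Hj). eapply final_deriv; eassumption. Qed.

Theorem lemmaA2 (m : nat) (N M dN dM : R -> Mat) (H : R)
  (hH : 0 <= H)
  (hN : forall l i j, (i < 2 * m)%nat -> (j < 2 * m)%nat ->
        derivable_pt_lim (fun x => N x i j) l (dN l i j))
  (hdN : forall i j, (i < 2 * m)%nat -> (j < 2 * m)%nat ->
        continuity (fun x => dN x i j))
  (hM : forall l i j, (i < 2 * m)%nat -> (j < 2 * m)%nat ->
        derivable_pt_lim (fun x => M x i j) l (dM l i j))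
  (hdM : forall i j, (i < 2 * m)%nat -> (j < 2 * m)%nat ->
        continuity (fun x => dM x i j))
  (hsym : forall l i j, (i < 2 * m)%nat -> (j < 2 * m)%nat ->
        M l i j = M l j i)
  (hF : forall l s, 0 <= s <= H -> forall i j, (i < 2 * m)%nat -> (j < 2 * m)%nat ->
        mmul (2 * m) (mtr (F2B m (N l) (M l) s)) (F3B m (N l) (M l) s) i j = mid i j)
  (hdF3 : forall l s, 0 <= s <= H -> forall i j, (i < 2 * m)%nat -> (j < 2 * m)%nat ->
        derivable_pt_lim (fun x => F3B m (N x) (M x) s i j) l
          (- mmul (2 * m) (Jm m) (G2B m (N l) (M l) s) i j)) :
  forall l i j, (i < 2 * m)%nat -> (j < 2 * m)%nat ->
    derivable_pt_lim (fun x => G2B m (N x) (M x) H i j) l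
      (let n := (2 * m)%nat in
       let F2H := F2B m (N l) (M l) H in
       let G2H := G2B m (N l) (M l) H in
       let F3H := F3B m (N l) (M l) H in
       let P := mmul n (mtr F3H) (gammaB m (N l) (M l) H) in
       let Int : Mat := fun p q =>
         Rint (fun s => mmul n (mmul n (mtr (F3B m (N l) (M l) s)) (dM l))
                              (F3B m (N l) (M l) s) p q) 0 H in
       let W := msub (madd (msub (mopp (mtr P)) P) Int)
                     (mmul n (mtr (mopp (mmul n (Jm m) G2H))) G2H) in
       mmul n F2H W i j).
Proof. intros l i j Hi Hj. apply (lemmaA2_proof m N M dN dM H hH hN hM hsym hF hdF3); auto. Qed.
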